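(* Let $\Omega\subset\mathbb{R}^2$ be a domain (connected open set) and let $u\in C^{2}(\Omega)$. Let $S(u)=\{(x,y)\in\Omega: u_x-y=0,\ u_y+x=0\}$, and on $\Omega\setminus S(u)$ let $D=\sqrt{(u_x-y)^2+(u_y+x)^2}$, $N(u)=(u_x-y,\,u_y+x)/D$ and $H=\operatorname{div}N(u)$ (the Euclidean divergence in the $xy$-plane). Let $p_0\in S(u)$ and suppose there are a constant $C>0$ and a neighborhood of $p_0$ on which $|H(p)|\le C/r(p)$ for all $p\notin S(u)$, where $r(p)=|p-p_0|$. Then either $p_0$ is an isolated point of $S(u)$, or there exists a small neighborhood of $p_0$ whose intersection with $S(u)$ is exactly a $C^{1}$ smooth curve passing through $p_0$. *)

(* Defs.v *)
From Stdlib Require Import Reals.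
From Coquelicot Require Import Coquelicot.
Open Scope R_scope.

Definition dist2 (x y x0 y0 : R) : R := sqrt ((x - x0)^2 + (y - y0)^2).

Definition open2 (Om : R -> R -> Prop) : Prop :=
  forall x y, Om x y -> exists e, 0 < e /\
    forall x' y', dist2 x' y' x y < e -> Om x' y'.

Definition connected2 (Om : R -> R -> Prop) : Prop :=
  forall U V : R -> R -> Prop, open2 U -> open2 V ->
    (forall x y, Om x y -> U x y \/ V x y) ->
    (forall x y, Om x y -> U x y -> V x y -> False) ->
    (forall x y, Om x y -> U x y) \/ (forall x y, Om x y -> V x y).

Definition domain2 (Om : R -> R -> Prop) : Prop :=
  open2 Om /\ connected2 Om /\ exists x y, Om x y.

Definition dx (f : R -> R -> R) (x y : R) : R := Derive (fun t => f t y) x.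
Definition dy (f : R -> R -> R) (x y : R) : R := Derive (fun t => f x t) y.

Definition ex_dx (f : R -> R -> R) (x y : R) : Prop := ex_derive (fun t => f t y) x.
Definition ex_dy (f : R -> R -> R) (x y : R) : Prop := ex_derive (fun t => f x t) y.

Definition cont2 (f : R -> R -> R) (x y : R) : Prop :=
  continuous (fun p : R * R => f (fst p) (snd p)) (x, y).

Definition C1_on (Om : R -> R -> Prop) (u : R -> R -> R) : Prop :=
  forall x y, Om x y ->
    ex_dx u x y /\ ex_dy u x y /\
    cont2 u x y /\ cont2 (dx u) x y /\ cont2 (dy u) x y.

Definition C2_on (Om : R -> R -> Prop) (u : R -> R -> R) : Prop :=
  C1_on Om u /\ C1_on Om (dx u) /\ C1_on Om (dy u).

Definition singular (Om : R -> R -> Prop) (u : R -> R -> R) (x y : R) : Prop :=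
  Om x y /\ dx u x y - y = 0 /\ dy u x y + x = 0.

Definition Dnorm (u : R -> R -> R) (x y : R) : R :=
  sqrt ((dx u x y - y)^2 + (dy u x y + x)^2).

Definition N1 (u : R -> R -> R) (x y : R) : R := (dx u x y - y) / Dnorm u x y.
Definition N2 (u : R -> R -> R) (x y : R) : R := (dy u x y + x) / Dnorm u x y.

Definition Hcurv (u : R -> R -> R) (x y : R) : R :=
  dx (N1 u) x y + dy (N2 u) x y.

Definition isolated_in (S : R -> R -> Prop) (x0 y0 : R) : Prop :=
  exists d, 0 < d /\ forall x y, dist2 x y x0 y0 < d -> S x y -> x = x0 /\ y = y0.

Definition C1_curve_through (g1 g2 : R -> R) (e x0 y0 : R) : Prop :=
  0 < e /\
  (forall t, -e < t < e ->
     ex_derive g1 t /\ ex_derive g2 t /\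
     continuous (Derive g1) t /\ continuous (Derive g2) t /\
     (Derive g1 t <> 0 \/ Derive g2 t <> 0)) /\
  (forall s t, -e < s < e -> -e < t < e -> g1 s = g1 t -> g2 s = g2 t -> s = t) /\
  g1 0 = x0 /\ g2 0 = y0.

(* Main.v *)
Require Import Defs.
From Stdlib Require Import Reals Lra Lia Psatz Classical ClassicalEpsilon.
From Coquelicot Require Import Coquelicot.
Open Scope R_scope.

Lemma cont2_eps f x y : cont2 f x y -> forall eps, 0 < eps -> exists del, 0 < del /\
  forall u v, Rabs (u - x) < del -> Rabs (v - y) < del -> Rabs (f u v - f x y) < eps.
Proof.
  intros H eps Heps.
  assert (H2 : continuity_2d_pt f x y) by (apply continuity_2d_pt_filterlim; exact H).
  destruct (H2 (mkposreal eps Heps)) as [d Hd].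
  exists d; split; [apply cond_pos|]. intros; apply Hd; auto.
Qed.

Definition SD (f : R -> R -> R) a b fx fy := forall eps, 0 < eps -> exists del, 0 < del /\
  forall x1 y1 x2 y2, Rabs (x1 - a) < del -> Rabs (y1 - b) < del ->
    Rabs (x2 - a) < del -> Rabs (y2 - b) < del ->
    Rabs (f x1 y1 - f x2 y2 - (fx * (x1 - x2) + fy * (y1 - y2)))
      <= eps * (Rabs (x1 - x2) + Rabs (y1 - y2)).

Lemma mvt_aux (g dg : R -> R) (a b c del : R) :
  Rabs (a - c) < del -> Rabs (b - c) < del ->
  (forall t, Rabs (t - c) < del -> is_derive g t (dg t)) ->
  exists t, Rabs (t - c) < del /\ g b - g a = dg t * (b - a).
Proof.
  intros Ha Hb Hd.
  assert (Hin : forall t, Rmin a b <= t <= Rmax a b -> Rabs (t - c) < del).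
  { intros t Ht. unfold Rmin, Rmax in Ht. destruct (Rle_dec a b);
    apply Rabs_def1; apply Rabs_def2 in Ha; apply Rabs_def2 in Hb; lra. }
  destruct (MVT_gen g a b dg) as [t [Ht Heq]].
  - intros t Ht; apply Hd, Hin; lra.
  - intros t Ht. apply continuity_pt_filterlim.
    apply (ex_derive_continuous g). exists (dg t). apply Hd, Hin; lra.
  - exists t; split; auto.
Qed.

Lemma SD_C1 f a b rho : 0 < rho ->
  (forall x y, Rabs (x - a) < rho -> Rabs (y - b) < rho -> ex_dx f x y /\ ex_dy f x y) ->
  cont2 (dx f) a b -> cont2 (dy f) a b -> SD f a b (dx f a b) (dy f a b).
Proof.
  intros Hr Hex Hcx Hcy eps Heps.
  destruct (cont2_eps _ _ _ Hcx eps Heps) as [d1 [Hd1 H1]].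
  destruct (cont2_eps _ _ _ Hcy eps Heps) as [d2 [Hd2 H2]].
  exists (Rmin rho (Rmin d1 d2)).
  assert (Hm1 := Rmin_l rho (Rmin d1 d2)). assert (Hm2 := Rmin_r rho (Rmin d1 d2)).
  assert (Hm3 := Rmin_l d1 d2). assert (Hm4 := Rmin_r d1 d2).
  split. { apply Rmin_glb_lt; auto. apply Rmin_glb_lt; auto. }
  set (del := Rmin rho (Rmin d1 d2)) in *.
  intros x1 y1 x2 y2 Hx1 Hy1 Hx2 Hy2.
  destruct (mvt_aux (fun t => f t y1) (fun t => dx f t y1) x2 x1 a del) as [c [Hc Ec]]; auto.
  { intros t Ht. unfold dx. apply Derive_correct. apply (Hex t y1); lra. }
  destruct (mvt_aux (fun t => f x2 t) (fun t => dy f x2 t) y2 y1 b del) as [c' [Hc' Ec']]; auto.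
  { intros t Ht. unfold dy. apply Derive_correct. apply (Hex x2 t); lra. }
  simpl in Ec, Ec'.
  assert (E : f x1 y1 - f x2 y2 - (dx f a b * (x1 - x2) + dy f a b * (y1 - y2)) =
     (dx f c y1 - dx f a b) * (x1 - x2) + (dy f x2 c' - dy f a b) * (y1 - y2)) by (rewrite <- (Rplus_0_r (f x1 y1)); lra).
  rewrite E.
  assert (B1 : Rabs (dx f c y1 - dx f a b) < eps) by (apply H1; lra).
  assert (B2 : Rabs (dy f x2 c' - dy f a b) < eps) by (apply H2; lra).
  eapply Rle_trans; [apply Rabs_triang|]. rewrite !Rabs_mult.
  assert (0 <= Rabs (x1 - x2)) by apply Rabs_pos. assert (0 <= Rabs (y1 - y2)) by apply Rabs_pos.
  nra.
Qed.
Lemma SD_comb f g a b fx fy gx gy al be ga de :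
  SD f a b fx fy -> SD g a b gx gy ->
  SD (fun x y => al * f x y + be * g x y + ga * x + de * y) a b
     (al * fx + be * gx + ga) (al * fy + be * gy + de).
Proof.
  intros Hf Hg eps Heps.
  set (K := Rabs al + Rabs be + 1).
  assert (HK : 0 < K) by (unfold K; assert (0 <= Rabs al) by apply Rabs_pos; assert (0 <= Rabs be) by apply Rabs_pos; lra).
  assert (He' : 0 < eps / K) by (apply Rdiv_lt_0_compat; auto).
  destruct (Hf _ He') as [d1 [Hd1 H1]]. destruct (Hg _ He') as [d2 [Hd2 H2]].
  exists (Rmin d1 d2). split; [apply Rmin_glb_lt; auto|].
  assert (Hm3 := Rmin_l d1 d2). assert (Hm4 := Rmin_r d1 d2).
  intros x1 y1 x2 y2 Hx1 Hy1 Hx2 Hy2.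
  assert (B1 := H1 x1 y1 x2 y2 ltac:(lra) ltac:(lra) ltac:(lra) ltac:(lra)).
  assert (B2 := H2 x1 y1 x2 y2 ltac:(lra) ltac:(lra) ltac:(lra) ltac:(lra)).
  set (S := Rabs (x1 - x2) + Rabs (y1 - y2)) in *.
  set (e1 := f x1 y1 - f x2 y2 - (fx * (x1 - x2) + fy * (y1 - y2))) in *.
  set (e2 := g x1 y1 - g x2 y2 - (gx * (x1 - x2) + gy * (y1 - y2))) in *.
  assert (E : al * f x1 y1 + be * g x1 y1 + ga * x1 + de * y1 -
     (al * f x2 y2 + be * g x2 y2 + ga * x2 + de * y2) -
     ((al * fx + be * gx + ga) * (x1 - x2) + (al * fy + be * gy + de) * (y1 - y2)) = al * e1 + be * e2)
    by (unfold e1, e2; ring).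
  rewrite E.
  eapply Rle_trans; [apply Rabs_triang|]. rewrite !Rabs_mult.
  assert (0 <= Rabs al) by apply Rabs_pos. assert (0 <= Rabs be) by apply Rabs_pos.
  assert (0 <= S) by (unfold S; assert (0 <= Rabs (x1 - x2)) by apply Rabs_pos; assert (0 <= Rabs (y1 - y2)) by apply Rabs_pos; lra).
  assert (Hk : eps / K * K = eps) by (field; lra).
  assert (Rabs al * Rabs e1 + Rabs be * Rabs e2 <= (Rabs al + Rabs be) * (eps / K * S)) by nra.
  assert ((Rabs al + Rabs be) * (eps / K * S) <= K * (eps / K * S)).
  { apply Rmult_le_compat_r. apply Rmult_le_pos; lra. unfold K; lra. }
  nra.
Qed.

Lemma SD_ext f g a b fx fy : (forall x y, f x y = g x y) -> SD f a b fx fy -> SD g a b fx fy.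
Proof. intros E H eps He. destruct (H eps He) as [d [Hd Hh]]. exists d; split; auto.
  intros; rewrite <- !E; auto. Qed.

Lemma SD_zero a b : SD (fun _ _ => 0) a b 0 0.
Proof. intros eps He. exists 1; split; [lra|]. intros. rewrite Rabs_right; [|lra].
  assert (0 <= Rabs (x1 - x2)) by apply Rabs_pos; assert (0 <= Rabs (y1 - y2)) by apply Rabs_pos. nra. Qed.

Lemma SD_eps_le f a b fx fy : SD f a b fx fy -> forall eps, 0 < eps -> exists del, 0 < del /\
  forall x1 y1 x2 y2, Rabs (x1 - a) < del -> Rabs (y1 - b) < del ->
    Rabs (x2 - a) < del -> Rabs (y2 - b) < del ->
    Rabs (f x1 y1 - f x2 y2 - (fx * (x1 - x2) + fy * (y1 - y2)))
      <= eps * (Rabs (x1 - x2) + Rabs (y1 - y2)).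
Proof. auto. Qed.

Lemma dist2_ge1 x y a b : Rabs (x - a) <= dist2 x y a b.
Proof. unfold dist2. rewrite <- sqrt_Rsqr_abs. apply sqrt_le_1_alt. unfold Rsqr. assert (0 <= (y-b)^2) by apply pow2_ge_0. nra. Qed.
Lemma dist2_ge2 x y a b : Rabs (y - b) <= dist2 x y a b.
Proof. unfold dist2. rewrite <- sqrt_Rsqr_abs. apply sqrt_le_1_alt. unfold Rsqr. assert (0 <= (x-a)^2) by apply pow2_ge_0. nra. Qed.
Lemma dist2_le x y a b : dist2 x y a b <= Rabs (x - a) + Rabs (y - b).
Proof. unfold dist2.
  assert (0 <= Rabs (x - a)) by apply Rabs_pos; assert (0 <= Rabs (y - b)) by apply Rabs_pos.
  rewrite <- (sqrt_Rsqr (Rabs (x - a) + Rabs (y - b))) by lra.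
  apply sqrt_le_1_alt. unfold Rsqr.
  assert (E1 : (x - a)^2 = Rabs (x - a) * Rabs (x - a)) by (unfold Rabs; destruct Rcase_abs; ring).
  assert (E2 : (y - b)^2 = Rabs (y - b) * Rabs (y - b)) by (unfold Rabs; destruct Rcase_abs; ring).
  rewrite E1, E2. nra. Qed.
Lemma dist2_ge x y a b : (Rabs (x - a) + Rabs (y - b)) / 2 <= dist2 x y a b.
Proof. assert (H1 := dist2_ge1 x y a b). assert (H2 := dist2_ge2 x y a b). lra. Qed.
Lemma dist2_pos x y a b : 0 <= dist2 x y a b.
Proof. unfold dist2; apply sqrt_pos. Qed.
Lemma is_derive_qn (P Q : R -> R) x dP dQ : is_derive P x dP -> is_derive Q x dQ ->
  0 < P x ^ 2 + Q x ^ 2 ->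
  is_derive (fun t => P t / sqrt (P t ^ 2 + Q t ^ 2)) x
    ((dP * Q x ^ 2 - P x * Q x * dQ) / (sqrt (P x ^ 2 + Q x ^ 2)) ^ 3).
Proof.
  intros HP HQ Hpos.
  assert (HD : sqrt (P x ^ 2 + Q x ^ 2) * sqrt (P x ^ 2 + Q x ^ 2) = P x ^ 2 + Q x ^ 2) by (apply sqrt_sqrt; lra).
  assert (HD0 : 0 < sqrt (P x ^ 2 + Q x ^ 2)) by (apply sqrt_lt_R0; lra).
  assert (L : exists l, is_derive (fun t => P t / sqrt (P t ^ 2 + Q t ^ 2)) x l /\
     l = ((dP * Q x ^ 2 - P x * Q x * dQ) / (sqrt (P x ^ 2 + Q x ^ 2)) ^ 3)).
  { eexists; split.
    - eapply is_derive_div. exact HP.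
      eapply (is_derive_comp sqrt (fun t => P t ^ 2 + Q t ^ 2)).
      + apply is_derive_Reals. apply derivable_pt_lim_sqrt. lra.
      + apply (is_derive_plus (fun t => P t ^ 2) (fun t => Q t ^ 2)); apply is_derive_pow; eauto.
      + lra.
    - set (D := sqrt (P x ^ 2 + Q x ^ 2)) in *. simpl.
      unfold scal, plus; simpl; unfold mult; simpl.
      set (p := P x) in *; set (q := Q x) in *.
      replace (dP * D - p * (((1 + 1) * dP * (p * 1) + (1 + 1) * dQ * (q * 1)) * / (2 * D)))
        with ((dP * (D * D) - p * (dP * p + dQ * q)) / D) by (field; lra).
      rewrite HD. field. lra. }
  destruct L as [l [H1 H2]]. rewrite <- H2; exact H1.
Qed.

Definition F1 (u : R -> R -> R) x y := dx u x y - y.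
Definition F2 (u : R -> R -> R) x y := dy u x y + x.

Lemma H_dxm f x y c : ex_dx f x y -> is_derive (fun t => f t y - c) x (dx f x y).
Proof. intros H. replace (dx f x y) with (dx f x y - 0) by ring.
  apply (is_derive_minus (fun t => f t y) (fun _ => c)); [apply Derive_correct; exact H | exact (is_derive_const _ _)]. Qed.
Lemma H_dxp f x y : ex_dx f x y -> is_derive (fun t => f t y + t) x (dx f x y + 1).
Proof. intros H.
  apply (is_derive_plus (fun t => f t y) (fun t => t)); [apply Derive_correct; exact H | exact (is_derive_id _)]. Qed.
Lemma H_dym f x y : ex_dy f x y -> is_derive (fun t => f x t - t) y (dy f x y - 1).
Proof. intros H.
  apply (is_derive_minus (fun t => f x t) (fun t => t)); [apply Derive_correct; exact H | exact (is_derive_id _)]. Qed.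
Lemma H_dyp f x y c : ex_dy f x y -> is_derive (fun t => f x t + c) y (dy f x y).
Proof. intros H. replace (dy f x y) with (dy f x y + 0) by ring.
  apply (is_derive_plus (fun t => f x t) (fun _ => c)); [apply Derive_correct; exact H | exact (is_derive_const _ _)]. Qed.

Definition Qf (u : R -> R -> R) x y a b :=
  dx (dx u) x y * b ^ 2 + dy (dy u) x y * a ^ 2 - a * b * (dy (dx u) x y + dx (dy u) x y).

Lemma Hcurv_formula Om u x y : C2_on Om u -> Om x y ->
  0 < F1 u x y ^ 2 + F2 u x y ^ 2 ->
  Hcurv u x y = Qf u x y (F1 u x y) (F2 u x y) / (Dnorm u x y) ^ 3.
Proof.
  intros [_ [Hdx Hdy]] HO Hpos.
  destruct (Hdx x y HO) as [Hxx [Hxy _]]. destruct (Hdy x y HO) as [Hyx [Hyy _]].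
  assert (E1 : dx (N1 u) x y = (dx (dx u) x y * F2 u x y ^ 2 - F1 u x y * F2 u x y * (dx (dy u) x y + 1)) / (Dnorm u x y) ^ 3).
  { unfold dx at 1. apply is_derive_unique. unfold N1, Dnorm.
    apply (is_derive_qn (fun t => dx u t y - y) (fun t => dy u t y + t)).
    apply H_dxm; exact Hxx. apply H_dxp; exact Hyx. exact Hpos. }
  assert (E2 : dy (N2 u) x y = (dy (dy u) x y * F1 u x y ^ 2 - F2 u x y * F1 u x y * (dy (dx u) x y - 1)) / (Dnorm u x y) ^ 3).
  { unfold dy at 1. apply is_derive_unique. unfold N2, Dnorm.
    apply (is_derive_ext (fun t => (dy u x t + x) / sqrt ((dy u x t + x) ^ 2 + (dx u x t - t) ^ 2))).
    { intros t. rewrite (Rplus_comm ((dy u x t + x) ^ 2)). reflexivity. }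
    replace ((dx u x y - y) ^ 2 + (dy u x y + x) ^ 2) with ((dy u x y + x) ^ 2 + (dx u x y - y) ^ 2) by ring.
    apply (is_derive_qn (fun t => dy u x t + x) (fun t => dx u x t - t)).
    apply H_dyp; exact Hyy. apply H_dym; exact Hxy. unfold F1, F2 in Hpos. simpl. lra. }
  unfold Hcurv. rewrite E1, E2. unfold Qf.
  assert (0 < Dnorm u x y) by (unfold Dnorm; apply sqrt_lt_R0; exact Hpos).
  field. lra.
Qed.

Lemma open_box Om a b : open2 Om -> Om a b -> exists rho, 0 < rho /\
  forall x y, Rabs (x - a) < rho -> Rabs (y - b) < rho -> Om x y.
Proof.
  intros HO Hab. destruct (HO a b Hab) as [e [He H]].
  exists (e / 2). split; [lra|]. intros x y Hx Hy. apply H.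
  assert (L := dist2_le x y a b). lra.
Qed.

Lemma SD_F1 Om u a b : open2 Om -> C2_on Om u -> Om a b ->
  SD (F1 u) a b (dx (dx u) a b) (dy (dx u) a b - 1).
Proof.
  intros HO [_ [Hdx _]] Hab. destruct (open_box Om a b HO Hab) as [rho [Hr Hbox]].
  assert (S : SD (dx u) a b (dx (dx u) a b) (dy (dx u) a b)).
  { apply (SD_C1 _ _ _ rho Hr).
    - intros x y Hx Hy. destruct (Hdx x y (Hbox x y Hx Hy)) as [A [B _]]. auto.
    - apply (Hdx a b Hab).
    - apply (Hdx a b Hab). }
  assert (S2 := SD_comb _ _ a b _ _ _ _ 1 0 0 (-1) S (SD_zero a b)).
  replace (dx (dx u) a b) with (1 * dx (dx u) a b + 0 * 0 + 0) by ring.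
  replace (dy (dx u) a b - 1) with (1 * dy (dx u) a b + 0 * 0 + -1) by ring.
  eapply SD_ext; [|exact S2]. intros; unfold F1; simpl; ring.
Qed.

Lemma SD_F2 Om u a b : open2 Om -> C2_on Om u -> Om a b ->
  SD (F2 u) a b (dx (dy u) a b + 1) (dy (dy u) a b).
Proof.
  intros HO [_ [_ Hdy]] Hab. destruct (open_box Om a b HO Hab) as [rho [Hr Hbox]].
  assert (S : SD (dy u) a b (dx (dy u) a b) (dy (dy u) a b)).
  { apply (SD_C1 _ _ _ rho Hr).
    - intros x y Hx Hy. destruct (Hdy x y (Hbox x y Hx Hy)) as [A [B _]]. auto.
    - apply (Hdy a b Hab).
    - apply (Hdy a b Hab). }
  assert (S2 := SD_comb _ _ a b _ _ _ _ 1 0 1 0 S (SD_zero a b)).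
  replace (dx (dy u) a b + 1) with (1 * dx (dy u) a b + 0 * 0 + 1) by ring.
  replace (dy (dy u) a b) with (1 * dy (dy u) a b + 0 * 0 + 0) by ring.
  eapply SD_ext; [|exact S2]. intros; unfold F2; simpl; ring.
Qed.

Lemma schwarz_at Om u a b : open2 Om -> C2_on Om u -> Om a b ->
  dx (dy u) a b = dy (dx u) a b.
Proof.
  intros HO [Hu [Hdx Hdy]] Hab. destruct (open_box Om a b HO Hab) as [rho [Hr Hbox]].
  apply Schwarz.
  - exists (mkposreal rho Hr). intros x y Hx Hy. simpl in Hx, Hy.
    assert (Oxy := Hbox x y Hx Hy).
    destruct (Hu x y Oxy) as [A1 [A2 _]]. destruct (Hdx x y Oxy) as [B1 [B2 _]].
    destruct (Hdy x y Oxy) as [C1 [C2 _]]. repeat split; auto.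
  - apply continuity_2d_pt_filterlim. apply (Hdy a b Hab).
  - apply continuity_2d_pt_filterlim. apply (Hdx a b Hab).
Qed.

Lemma abs_comb2 p q e1 e2 B : Rabs e1 <= B -> Rabs e2 <= B ->
  Rabs (p * e1 - q * e2) <= (Rabs p + Rabs q) * B.
Proof.
  intros H1 H2. unfold Rminus. eapply Rle_trans; [apply Rabs_triang|].
  rewrite Rabs_Ropp, !Rabs_mult.
  assert (0 <= Rabs p) by apply Rabs_pos. assert (0 <= Rabs q) by apply Rabs_pos.
  assert (Rabs p * Rabs e1 <= Rabs p * B) by (apply Rmult_le_compat_l; auto).
  assert (Rabs q * Rabs e2 <= Rabs q * B) by (apply Rmult_le_compat_l; auto). lra.
Qed.

Lemma nondeg f1 f2 a b m11 m12 m21 m22 : SD f1 a b m11 m12 -> SD f2 a b m21 m22 ->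
  f1 a b = 0 -> f2 a b = 0 -> m11 * m22 - m12 * m21 <> 0 ->
  exists d, 0 < d /\ forall x y, Rabs (x - a) < d -> Rabs (y - b) < d ->
    f1 x y = 0 -> f2 x y = 0 -> x = a /\ y = b.
Proof.
  intros S1 S2 E1 E2 Hdet.
  set (K := Rabs m11 + Rabs m12 + Rabs m21 + Rabs m22 + 1).
  assert (P11 : 0 <= Rabs m11) by apply Rabs_pos. assert (P12 : 0 <= Rabs m12) by apply Rabs_pos.
  assert (P21 : 0 <= Rabs m21) by apply Rabs_pos. assert (P22 : 0 <= Rabs m22) by apply Rabs_pos.
  assert (HK : 0 < K) by (unfold K; lra).
  set (dt := Rabs (m11 * m22 - m12 * m21)).
  assert (Hdt : 0 < dt) by (apply Rabs_pos_lt; auto).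
  set (eps := dt / (4 * K)).
  assert (He : 0 < eps) by (apply Rdiv_lt_0_compat; lra).
  destruct (S1 eps He) as [d1 [Hd1 G1]]. destruct (S2 eps He) as [d2 [Hd2 G2]].
  exists (Rmin d1 d2). split; [apply Rmin_glb_lt; auto|].
  assert (Hm3 := Rmin_l d1 d2). assert (Hm4 := Rmin_r d1 d2).
  intros x y Hx Hy F1z F2z.
  assert (Ha0 : Rabs (a - a) < d1) by (rewrite Rminus_diag, Rabs_R0; lra).
  assert (Hb0 : Rabs (b - b) < d1) by (rewrite Rminus_diag, Rabs_R0; lra).
  assert (Ha0' : Rabs (a - a) < d2) by (rewrite Rminus_diag, Rabs_R0; lra).
  assert (Hb0' : Rabs (b - b) < d2) by (rewrite Rminus_diag, Rabs_R0; lra).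
  assert (B1 := G1 x y a b ltac:(lra) ltac:(lra) Ha0 Hb0).
  assert (B2 := G2 x y a b ltac:(lra) ltac:(lra) Ha0' Hb0').
  rewrite F1z, E1 in B1. rewrite F2z, E2 in B2.
  set (X := x - a) in *. set (Y := y - b) in *.
  set (S := Rabs X + Rabs Y) in *.
  set (e1 := m11 * X + m12 * Y) in *. set (e2 := m21 * X + m22 * Y) in *.
  replace (0 - 0 - e1) with (- e1) in B1 by ring. rewrite Rabs_Ropp in B1.
  replace (0 - 0 - e2) with (- e2) in B2 by ring. rewrite Rabs_Ropp in B2.
  assert (EX : (m11 * m22 - m12 * m21) * X = m22 * e1 - m12 * e2) by (unfold e1, e2; ring).
  assert (EY : (m11 * m22 - m12 * m21) * Y = m11 * e2 - m21 * e1) by (unfold e1, e2; ring).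
  assert (CX := abs_comb2 m22 m12 e1 e2 _ B1 B2). rewrite <- EX, Rabs_mult in CX.
  assert (CY := abs_comb2 m11 m21 e2 e1 _ B2 B1). rewrite <- EY, Rabs_mult in CY.
  fold dt in CX, CY.
  assert (HS : 0 <= S) by (unfold S; assert (0 <= Rabs X) by apply Rabs_pos; assert (0 <= Rabs Y) by apply Rabs_pos; lra).
  assert (Hsum : dt * S <= K * (eps * S)).
  { unfold S. rewrite Rmult_plus_distr_l.
    assert ((Rabs m22 + Rabs m12) * (eps * S) + (Rabs m11 + Rabs m21) * (eps * S) <= K * (eps * S)).
    { rewrite <- Rmult_plus_distr_r. apply Rmult_le_compat_r. apply Rmult_le_pos; lra. unfold K; lra. }
    fold S. lra. }
  assert (Heq : K * (eps * S) = dt * S / 4) by (unfold eps; field; lra).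
  assert (S = 0) by nra.
  assert (0 <= Rabs X) by apply Rabs_pos; assert (0 <= Rabs Y) by apply Rabs_pos.
  assert (ZX : Rabs X = 0) by (unfold S in *; lra). assert (ZY : Rabs Y = 0) by (unfold S in *; lra).
  apply Rabs_eq_0 in ZX. apply Rabs_eq_0 in ZY. unfold X, Y in *. lra.
Qed.

Lemma mono3 a b c a' b' c' : 0 <= a <= a' -> 0 <= b <= b' -> 0 <= c <= c' -> a * b * c <= a' * b' * c'.
Proof. intros. apply Rmult_le_compat; try lra. apply Rmult_le_pos; lra. apply Rmult_le_compat; lra. Qed.

Lemma prod3 x y z x0 y0 z0 eta : 0 <= eta <= 1 ->
  Rabs (x - x0) <= eta -> Rabs (y - y0) <= eta -> Rabs (z - z0) <= eta ->
  Rabs (x * y * z - x0 * y0 * z0) <= 3 * eta * ((Rabs x0 + 1) * (Rabs y0 + 1) * (Rabs z0 + 1)).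
Proof.
  intros He Hx Hy Hz.
  assert (Ay : Rabs y <= Rabs y0 + 1).
  { assert (T := Rabs_triang_inv y y0). lra. }
  assert (Az : Rabs z <= Rabs z0 + 1).
  { assert (T := Rabs_triang_inv z z0). lra. }
  assert (P1 : 0 <= Rabs x0) by apply Rabs_pos. assert (P2 : 0 <= Rabs y0) by apply Rabs_pos.
  assert (P3 : 0 <= Rabs z0) by apply Rabs_pos. assert (P4 : 0 <= Rabs y) by apply Rabs_pos.
  assert (P5 : 0 <= Rabs z) by apply Rabs_pos.
  assert (P6 : 0 <= Rabs (x - x0)) by apply Rabs_pos. assert (P7 : 0 <= Rabs (y - y0)) by apply Rabs_pos.
  assert (P8 : 0 <= Rabs (z - z0)) by apply Rabs_pos.
  replace (x * y * z - x0 * y0 * z0) with ((x - x0) * y * z + x0 * (y - y0) * z + x0 * y0 * (z - z0)) by ring.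
  eapply Rle_trans; [apply Rabs_triang|]. eapply Rle_trans; [apply Rplus_le_compat_r; apply Rabs_triang|].
  rewrite !Rabs_mult.
  assert (Q1 := mono3 (Rabs (x - x0)) (Rabs y) (Rabs z) (eta * (Rabs x0 + 1)) (Rabs y0 + 1) (Rabs z0 + 1)
     ltac:(nra) ltac:(lra) ltac:(lra)).
  assert (Q2 := mono3 (Rabs x0) (Rabs (y - y0)) (Rabs z) (Rabs x0 + 1) (eta * (Rabs y0 + 1)) (Rabs z0 + 1)
     ltac:(nra) ltac:(nra) ltac:(lra)).
  assert (Q3 := mono3 (Rabs x0) (Rabs y0) (Rabs (z - z0)) (Rabs x0 + 1) (Rabs y0 + 1) (eta * (Rabs z0 + 1))
     ltac:(nra) ltac:(nra) ltac:(nra)).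
  assert (E1 : eta * (Rabs x0 + 1) * (Rabs y0 + 1) * (Rabs z0 + 1) = eta * ((Rabs x0 + 1) * (Rabs y0 + 1) * (Rabs z0 + 1))) by ring.
  assert (E2 : (Rabs x0 + 1) * (eta * (Rabs y0 + 1)) * (Rabs z0 + 1) = eta * ((Rabs x0 + 1) * (Rabs y0 + 1) * (Rabs z0 + 1))) by ring.
  assert (E3 : (Rabs x0 + 1) * (Rabs y0 + 1) * (eta * (Rabs z0 + 1)) = eta * ((Rabs x0 + 1) * (Rabs y0 + 1) * (Rabs z0 + 1))) by ring.
  lra.
Qed.

Definition Qgen (c1 c2 c3 A B : R) := c1 * B ^ 2 + c2 * A ^ 2 - A * B * c3.
Definition Kq (c10 c20 c30 V1 V2 : R) := 3 * ((Rabs c10 + 1) * (Rabs V2 + 1) * (Rabs V2 + 1) +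
   (Rabs c20 + 1) * (Rabs V1 + 1) * (Rabs V1 + 1) + (Rabs V1 + 1) * (Rabs V2 + 1) * (Rabs c30 + 1)).

Lemma Kq_pos c10 c20 c30 V1 V2 : 0 < Kq c10 c20 c30 V1 V2.
Proof. unfold Kq.
  assert (0 <= Rabs c10) by apply Rabs_pos. assert (0 <= Rabs c20) by apply Rabs_pos.
  assert (0 <= Rabs c30) by apply Rabs_pos. assert (0 <= Rabs V1) by apply Rabs_pos.
  assert (0 <= Rabs V2) by apply Rabs_pos.
  assert (1 <= (Rabs c10 + 1) * (Rabs V2 + 1) * (Rabs V2 + 1)) by (assert (T := mono3 1 1 1 (Rabs c10 + 1) (Rabs V2 + 1) (Rabs V2 + 1)); lra).
  assert (0 <= (Rabs c20 + 1) * (Rabs V1 + 1) * (Rabs V1 + 1)) by (assert (T := mono3 0 0 0 (Rabs c20 + 1) (Rabs V1 + 1) (Rabs V1 + 1)); lra).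
  assert (0 <= (Rabs V1 + 1) * (Rabs V2 + 1) * (Rabs c30 + 1)) by (assert (T := mono3 0 0 0 (Rabs V1 + 1) (Rabs V2 + 1) (Rabs c30 + 1)); lra).
  lra. Qed.

Lemma Qgen_cont c1 c2 c3 A B c10 c20 c30 V1 V2 eta : 0 <= eta <= 1 ->
  Rabs (c1 - c10) <= eta -> Rabs (c2 - c20) <= eta -> Rabs (c3 - c30) <= eta ->
  Rabs (A - V1) <= eta -> Rabs (B - V2) <= eta ->
  Rabs (Qgen c1 c2 c3 A B - Qgen c10 c20 c30 V1 V2) <= eta * Kq c10 c20 c30 V1 V2.
Proof.
  intros He H1 H2 H3 HA HB.
  assert (T1 := prod3 c1 B B c10 V2 V2 eta He H1 HB HB).
  assert (T2 := prod3 c2 A A c20 V1 V1 eta He H2 HA HA).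
  assert (T3 := prod3 A B c3 V1 V2 c30 eta He HA HB H3).
  unfold Qgen, Kq.
  replace (c1 * B ^ 2 + c2 * A ^ 2 - A * B * c3 - (c10 * V2 ^ 2 + c20 * V1 ^ 2 - V1 * V2 * c30))
    with ((c1 * B * B - c10 * V2 * V2) + (c2 * A * A - c20 * V1 * V1) - (A * B * c3 - V1 * V2 * c30)) by ring.
  unfold Rminus at 1. eapply Rle_trans; [apply Rabs_triang|]. rewrite Rabs_Ropp.
  eapply Rle_trans; [apply Rplus_le_compat_r; apply Rabs_triang|]. lra.
Qed.

Lemma sqrt_le_abs u v : sqrt (u ^ 2 + v ^ 2) <= Rabs u + Rabs v.
Proof. assert (T := dist2_le u v 0 0). unfold dist2 in T. rewrite !Rminus_0_r in T. exact T. Qed.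

Lemma abs_le_lin k g e z : Rabs k <= 1 -> 0 < e -> Rabs (k * g * z / e) <= Rabs g * Rabs z / e.
Proof. intros Hk He. unfold Rdiv. rewrite !Rabs_mult, Rabs_inv, (Rabs_right e) by lra.
  assert (0 <= Rabs g) by apply Rabs_pos. assert (0 <= Rabs z) by apply Rabs_pos.
  assert (0 < / e) by (apply Rinv_0_lt_compat; lra).
  assert (0 <= Rabs k) by apply Rabs_pos.
  assert (0 <= Rabs g * Rabs z * / e) by (apply Rmult_le_pos; [apply Rmult_le_pos|]; lra).
  replace (Rabs k * Rabs g * Rabs z * / e) with (Rabs k * (Rabs g * Rabs z * / e)) by ring. nra. Qed.

Lemma EA_gen n1 n2 f1 f2 k0 g : g <> 0 -> n1 ^ 2 + n2 ^ 2 <> 0 ->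
  f1 / (g / (n1 ^ 2 + n2 ^ 2)) - (k0 * n1 - n2) =
  (n1 * ((n1 * f1 + n2 * f2) - k0 * g) - n2 * ((- n2 * f1 + n1 * f2) - g)) / g.
Proof. intros. field. auto. Qed.
Lemma EB_gen n1 n2 f1 f2 k0 g : g <> 0 -> n1 ^ 2 + n2 ^ 2 <> 0 ->
  f2 / (g / (n1 ^ 2 + n2 ^ 2)) - (k0 * n2 + n1) =
  (n2 * ((n1 * f1 + n2 * f2) - k0 * g) + n1 * ((- n2 * f1 + n1 * f2) - g)) / g.
Proof. intros. field. auto. Qed.

Lemma deg_main (f1 f2 c1 c2 c3 : R -> R -> R) a b m11 m12 m21 m22 n1 n2 k0 C dH :
  SD f1 a b m11 m12 -> SD f2 a b m21 m22 -> f1 a b = 0 -> f2 a b = 0 ->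
  0 < n1 ^ 2 + n2 ^ 2 ->
  - n2 * m11 + n1 * m21 = 0 -> - n2 * m12 + n1 * m22 = 0 ->
  0 < (n1 * m11 + n2 * m21) ^ 2 + (n1 * m12 + n2 * m22) ^ 2 ->
  Rabs k0 <= 1 ->
  Qgen (c1 a b) (c2 a b) (c3 a b) (k0 * n1 - n2) (k0 * n2 + n1) <> 0 ->
  (forall eps, 0 < eps -> exists del, 0 < del /\ forall x y, Rabs (x - a) < del -> Rabs (y - b) < del ->
     Rabs (c1 x y - c1 a b) < eps /\ Rabs (c2 x y - c2 a b) < eps /\ Rabs (c3 x y - c3 a b) < eps) ->
  0 < C -> 0 < dH ->
  (forall x y, dist2 x y a b < dH -> ~ (f1 x y = 0 /\ f2 x y = 0) ->
     Rabs (Qgen (c1 x y) (c2 x y) (c3 x y) (f1 x y) (f2 x y)) * dist2 x y a b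
       <= C * (sqrt (f1 x y ^ 2 + f2 x y ^ 2)) ^ 3) ->
  exists del, 0 < del /\ forall x y, Rabs (x - a) < del -> Rabs (y - b) < del ->
    n1 * f1 x y + n2 * f2 x y = 0 -> - n2 * f1 x y + n1 * f2 x y = 0.
Proof.
  intros S1 S2 E1 E2 HN Hw1 Hw2 HNu Hk0 HQ0 Hc HC HdH Hbound.
  set (nu1 := n1 * m11 + n2 * m21) in *. set (nu2 := n1 * m12 + n2 * m22) in *.
  set (Nu := nu1 ^ 2 + nu2 ^ 2) in *. set (N2 := n1 ^ 2 + n2 ^ 2) in *.
  assert (Pn1 : 0 <= Rabs nu1) by apply Rabs_pos. assert (Pn2 : 0 <= Rabs nu2) by apply Rabs_pos.
  set (L := (Rabs nu1 + Rabs nu2) / Nu).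
  assert (HL : 0 <= L) by (unfold L; apply Rmult_le_pos; [lra | left; apply Rinv_0_lt_compat; lra]).
  set (V1 := k0 * n1 - n2) in *. set (V2 := k0 * n2 + n1) in *.
  set (Q0 := Qgen (c1 a b) (c2 a b) (c3 a b) V1 V2) in *.
  set (c0 := Rabs Q0).
  assert (Hc0 : 0 < c0) by (apply Rabs_pos_lt; auto).
  set (K := Kq (c1 a b) (c2 a b) (c3 a b) V1 V2).
  assert (HK : 0 < K) by apply Kq_pos.
  set (eta := Rmin 1 (c0 / (2 * K))).
  assert (Heta : 0 < eta) by (apply Rmin_glb_lt; [lra| apply Rdiv_lt_0_compat; lra]).
  assert (Heta1 : eta <= 1) by apply Rmin_l.
  assert (HetaK : eta * K <= c0 / 2).
  { assert (eta <= c0 / (2 * K)) by apply Rmin_r.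
    apply Rle_trans with (c0 / (2 * K) * K). apply Rmult_le_compat_r; lra. right; field; lra. }
  assert (PV1 : 0 <= Rabs V1) by apply Rabs_pos. assert (PV2 : 0 <= Rabs V2) by apply Rabs_pos.
  set (T := Rabs V1 + Rabs V2 + 2).
  assert (HT : 0 < T) by (unfold T; lra).
  assert (Pa1 : 0 <= Rabs n1) by apply Rabs_pos. assert (Pa2 : 0 <= Rabs n2) by apply Rabs_pos.
  set (nn := Rabs n1 + Rabs n2 + 1).
  assert (Hnn : 0 < nn) by (unfold nn; lra).
  assert (HT3 : 0 < T ^ 3) by (apply pow_lt; lra).
  set (eps := Rmin (Rmin (eta / (nn * (L + 1))) (1 / (2 * (L + 1)))) (c0 * N2 / (16 * C * T ^ 3))).
  assert (Heps : 0 < eps).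
  { unfold eps. apply Rmin_glb_lt; [apply Rmin_glb_lt|]; apply Rdiv_lt_0_compat; try nra. }
  assert (Ee1 : (Rabs n1 + Rabs n2) * eps * L <= eta).
  { assert (eps <= eta / (nn * (L + 1))) by (unfold eps; eapply Rle_trans; [apply Rmin_l| apply Rmin_l]).
    apply Rle_trans with (nn * (L + 1) * eps).
    { assert (0 <= eps * L) by nra. unfold nn. nra. }
    apply Rle_trans with (nn * (L + 1) * (eta / (nn * (L + 1)))).
    apply Rmult_le_compat_l; [nra|auto]. right; field; lra. }
  assert (Ee2 : eps * L <= 1 / 2).
  { assert (eps <= 1 / (2 * (L + 1))) by (unfold eps; eapply Rle_trans; [apply Rmin_l| apply Rmin_r]).
    apply Rle_trans with (eps * (L + 1)). nra.
    apply Rle_trans with (1 / (2 * (L + 1)) * (L + 1)). apply Rmult_le_compat_r; lra. right; field; lra. }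
  assert (Ee3 : C * eps * T ^ 3 / N2 <= c0 / 16).
  { assert (eps <= c0 * N2 / (16 * C * T ^ 3)) by (unfold eps; apply Rmin_r).
    apply Rle_trans with (C * (c0 * N2 / (16 * C * T ^ 3)) * T ^ 3 / N2).
    unfold Rdiv. apply Rmult_le_compat_r. left; apply Rinv_0_lt_compat; lra.
    apply Rmult_le_compat_r. lra. apply Rmult_le_compat_l; lra.
    right; field; repeat split; lra. }
  assert (SG := SD_comb _ _ a b _ _ _ _ n1 n2 0 0 S1 S2).
  assert (SW := SD_comb _ _ a b _ _ _ _ (- n2) n1 0 0 S1 S2).
  destruct (SG eps Heps) as [dG [HdG HG]]. destruct (SW eps Heps) as [dW [HdW HW]].
  destruct (Hc eta Heta) as [dc [Hdc Hcc]].
  set (del := Rmin (Rmin dG dW) (Rmin dc dH) / 6).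
  assert (Hdel : 0 < del) by (unfold del; apply Rdiv_lt_0_compat; [repeat apply Rmin_glb_lt|]; lra).
  assert (Hd1 : 6 * del <= dG) by (unfold del; assert (T1 := Rmin_l (Rmin dG dW) (Rmin dc dH)); assert (T2 := Rmin_l dG dW); lra).
  assert (Hd2 : 6 * del <= dW) by (unfold del; assert (T1 := Rmin_l (Rmin dG dW) (Rmin dc dH)); assert (T2 := Rmin_r dG dW); lra).
  assert (Hd3 : 6 * del <= dc) by (unfold del; assert (T1 := Rmin_r (Rmin dG dW) (Rmin dc dH)); assert (T2 := Rmin_l dc dH); lra).
  assert (Hd4 : 6 * del <= dH) by (unfold del; assert (T1 := Rmin_r (Rmin dG dW) (Rmin dc dH)); assert (T2 := Rmin_r dc dH); lra).
  exists del. split; [exact Hdel|].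
  intros x y Hx Hy HGq.
  set (g := - n2 * f1 x y + n1 * f2 x y).
  destruct (Req_dec g 0) as [Hg0|Hg0]; [exact Hg0|]. exfalso.
  assert (Z0 : Rabs (a - a) = 0) by (rewrite Rminus_diag; apply Rabs_R0).
  assert (Z1 : Rabs (b - b) = 0) by (rewrite Rminus_diag; apply Rabs_R0).
  set (S := Rabs (x - a) + Rabs (y - b)).
  assert (HgS : Rabs g <= eps * S).
  { assert (T1 := HW x y a b ltac:(lra) ltac:(lra) ltac:(lra) ltac:(lra)).
    rewrite E1, E2 in T1. rewrite Hw1, Hw2 in T1.
    replace (- n2 * f1 x y + n1 * f2 x y + 0 * x + 0 * y - (- n2 * 0 + n1 * 0 + 0 * a + 0 * b) -
       ((0 + 0) * (x - a) + (0 + 0) * (y - b))) with g in T1 by (unfold g; ring). exact T1. }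
  assert (Pg : 0 < Rabs g) by (apply Rabs_pos_lt; auto).
  assert (HS : 0 < S).
  { destruct (Rle_lt_dec S 0) as [h|h]; auto. nra. }
  set (px := x + k0 * g * nu1 / Nu). set (py := y + k0 * g * nu2 / Nu).
  assert (Hpq : Rabs (px - x) + Rabs (py - y) <= L * Rabs g).
  { unfold px, py. replace (x + k0 * g * nu1 / Nu - x) with (k0 * g * nu1 / Nu) by ring.
    replace (y + k0 * g * nu2 / Nu - y) with (k0 * g * nu2 / Nu) by ring.
    assert (A1 := abs_le_lin k0 g Nu nu1 Hk0 HNu). assert (A2 := abs_le_lin k0 g Nu nu2 Hk0 HNu).
    replace (L * Rabs g) with (Rabs g * Rabs nu1 / Nu + Rabs g * Rabs nu2 / Nu) by (unfold L; field; lra).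
    lra. }
  assert (HLg : L * Rabs g <= S / 2).
  { apply Rle_trans with (L * (eps * S)). apply Rmult_le_compat_l; lra. nra. }
  assert (Sx : Rabs (x - a) <= S) by (unfold S; assert (0 <= Rabs (y - b)) by apply Rabs_pos; lra).
  assert (Sy : Rabs (y - b) <= S) by (unfold S; assert (0 <= Rabs (x - a)) by apply Rabs_pos; lra).
  assert (S2d : S < 2 * del) by (unfold S; lra).
  assert (Ppx : Rabs (px - x) <= L * Rabs g) by (assert (0 <= Rabs (py - y)) by apply Rabs_pos; lra).
  assert (Ppy : Rabs (py - y) <= L * Rabs g) by (assert (0 <= Rabs (px - x)) by apply Rabs_pos; lra).
  assert (Hpx : Rabs (px - a) < 3 * del).
  { replace (px - a) with ((px - x) + (x - a)) by ring. eapply Rle_lt_trans; [apply Rabs_triang|]. lra. }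
  assert (Hpy : Rabs (py - b) < 3 * del).
  { replace (py - b) with ((py - y) + (y - b)) by ring. eapply Rle_lt_trans; [apply Rabs_triang|]. lra. }
  set (Gp := n1 * f1 px py + n2 * f2 px py). set (Wp := - n2 * f1 px py + n1 * f2 px py).
  assert (EG : Rabs (Gp - k0 * g) <= eps * (L * Rabs g)).
  { assert (T1 := HG px py x y ltac:(lra) ltac:(lra) ltac:(lra) ltac:(lra)).
    replace (n1 * f1 px py + n2 * f2 px py + 0 * px + 0 * py - (n1 * f1 x y + n2 * f2 x y + 0 * x + 0 * y) -
       ((n1 * m11 + n2 * m21 + 0) * (px - x) + (n1 * m12 + n2 * m22 + 0) * (py - y))) with (Gp - k0 * g) in T1.
    eapply Rle_trans; [exact T1|]. apply Rmult_le_compat_l; lra.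
    assert (Eid : nu1 * (k0 * g * nu1 / Nu) + nu2 * (k0 * g * nu2 / Nu) = k0 * g).
    { unfold Nu. field. apply Rgt_not_eq. exact HNu. }
    unfold Gp. rewrite HGq. unfold px, py.
    set (t1 := k0 * g * nu1 / Nu) in *. set (t2 := k0 * g * nu2 / Nu) in *.
    rewrite <- Eid. unfold nu1, nu2. ring. }
  assert (EW : Rabs (Wp - g) <= eps * (L * Rabs g)).
  { assert (T1 := HW px py x y ltac:(lra) ltac:(lra) ltac:(lra) ltac:(lra)).
    rewrite Hw1, Hw2 in T1.
    replace (- n2 * f1 px py + n1 * f2 px py + 0 * px + 0 * py - (- n2 * f1 x y + n1 * f2 x y + 0 * x + 0 * y) -
       ((0 + 0) * (px - x) + (0 + 0) * (py - y))) with (Wp - g) in T1 by (unfold Wp, g; ring).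
    eapply Rle_trans; [exact T1|]. apply Rmult_le_compat_l; lra. }
  set (phi := g / N2).
  assert (Hphi : phi <> 0) by (unfold phi; apply Rmult_integral_contrapositive_currified; [auto| apply Rinv_neq_0_compat; lra]).
  set (A := f1 px py / phi). set (B := f2 px py / phi).
  assert (EA : A - V1 = (n1 * (Gp - k0 * g) - n2 * (Wp - g)) / g).
  { apply EA_gen; [auto| exact (Rgt_not_eq _ _ HN)]. }
  assert (EB : B - V2 = (n2 * (Gp - k0 * g) + n1 * (Wp - g)) / g).
  { apply EB_gen; [auto| exact (Rgt_not_eq _ _ HN)]. }
  assert (Hlin : forall p q, Rabs ((p * (Gp - k0 * g) + q * (Wp - g)) / g) <= (Rabs p + Rabs q) * eps * L).
  { intros p q. unfold Rdiv. rewrite Rabs_mult, Rabs_inv.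
    apply Rle_trans with ((Rabs p * (eps * (L * Rabs g)) + Rabs q * (eps * (L * Rabs g))) * / Rabs g).
    apply Rmult_le_compat_r. left; apply Rinv_0_lt_compat; lra.
    eapply Rle_trans; [apply Rabs_triang|]. rewrite !Rabs_mult.
    apply Rplus_le_compat; apply Rmult_le_compat_l; try apply Rabs_pos; lra.
    right. field. lra. }
  assert (BA : Rabs (A - V1) <= eta).
  { rewrite EA. replace (n1 * (Gp - k0 * g) - n2 * (Wp - g)) with (n1 * (Gp - k0 * g) + (- n2) * (Wp - g)) by ring.
    eapply Rle_trans; [apply Hlin|]. rewrite Rabs_Ropp. lra. }
  assert (BB : Rabs (B - V2) <= eta).
  { rewrite EB. eapply Rle_trans; [apply Hlin|]. rewrite Rplus_comm. lra. }
  destruct (Hcc px py ltac:(lra) ltac:(lra)) as [C1 [C2 C3]].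
  assert (QC := Qgen_cont (c1 px py) (c2 px py) (c3 px py) A B (c1 a b) (c2 a b) (c3 a b) V1 V2 eta
     ltac:(lra) ltac:(lra) ltac:(lra) ltac:(lra) BA BB).
  fold K Q0 in QC.
  set (Qp := Qgen (c1 px py) (c2 px py) (c3 px py) A B) in *.
  assert (HQp : c0 / 2 <= Rabs Qp).
  { assert (T1 := Rabs_triang_inv Q0 (Q0 - Qp)). replace (Q0 - (Q0 - Qp)) with Qp in T1 by ring.
    rewrite <- Rabs_Ropp in QC. replace (- (Qp - Q0)) with (Q0 - Qp) in QC by ring. fold c0 in T1. lra. }
  assert (Ef1 : f1 px py = phi * A) by (unfold A; field; auto).
  assert (Ef2 : f2 px py = phi * B) by (unfold B; field; auto).
  assert (Hnz : ~ (f1 px py = 0 /\ f2 px py = 0)).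
  { intros [Z1' Z2']. assert (A = 0) by (unfold A; rewrite Z1'; unfold Rdiv; ring).
    assert (B = 0) by (unfold B; rewrite Z2'; unfold Rdiv; ring).
    assert (Qp = 0) by (unfold Qp, Qgen; rewrite H, H0; ring). rewrite H1, Rabs_R0 in HQp. lra. }
  assert (Hdp : dist2 px py a b < dH).
  { assert (T1 := dist2_le px py a b). lra. }
  assert (HB := Hbound px py Hdp Hnz).
  rewrite Ef1, Ef2 in HB.
  assert (EQ : Qgen (c1 px py) (c2 px py) (c3 px py) (phi * A) (phi * B) = phi ^ 2 * Qp) by (unfold Qp, Qgen; ring).
  rewrite EQ, Rabs_mult in HB.
  assert (AA : Rabs A <= Rabs V1 + 1).
  { assert (T1 := Rabs_triang_inv A V1). lra. }
  assert (AB : Rabs B <= Rabs V2 + 1).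
  { assert (T1 := Rabs_triang_inv B V2). lra. }
  assert (Hsq : sqrt ((phi * A) ^ 2 + (phi * B) ^ 2) <= Rabs phi * T).
  { eapply Rle_trans; [apply sqrt_le_abs|]. rewrite !Rabs_mult.
    assert (P : 0 <= Rabs phi) by apply Rabs_pos.
    assert (Rabs phi * Rabs A <= Rabs phi * (Rabs V1 + 1)) by (apply Rmult_le_compat_l; auto).
    assert (Rabs phi * Rabs B <= Rabs phi * (Rabs V2 + 1)) by (apply Rmult_le_compat_l; auto).
    replace (Rabs phi * T) with (Rabs phi * (Rabs V1 + 1) + Rabs phi * (Rabs V2 + 1)) by (unfold T; ring). lra. }
  assert (Hcube : sqrt ((phi * A) ^ 2 + (phi * B) ^ 2) ^ 3 <= (Rabs phi * T) ^ 3).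
  { apply pow_incr. split; [apply sqrt_pos| exact Hsq]. }
  set (r := dist2 px py a b) in *.
  assert (Hr : S / 4 <= r).
  { assert (T1 := dist2_ge px py a b). fold r in T1.
    assert (T2 : Rabs (x - a) <= Rabs (px - a) + Rabs (px - x)) by
      (replace (x - a) with ((px - a) + - (px - x)) by ring; eapply Rle_trans; [apply Rabs_triang| rewrite Rabs_Ropp; lra]).
    assert (T3 : Rabs (y - b) <= Rabs (py - b) + Rabs (py - y)) by
      (replace (y - b) with ((py - b) + - (py - y)) by ring; eapply Rle_trans; [apply Rabs_triang| rewrite Rabs_Ropp; lra]).
    unfold S in *. lra. }
  assert (Pphi : 0 < Rabs phi) by (apply Rabs_pos_lt; auto).
  assert (Habsphi2 : Rabs (phi ^ 2) = Rabs phi * Rabs phi) by (rewrite <- RPow_abs; ring).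
  rewrite Habsphi2 in HB.
  assert (Hmain : Rabs phi * Rabs phi * (c0 / 2 * (S / 4)) <= Rabs phi * Rabs phi * (C * Rabs phi * T ^ 3)).
  { apply Rle_trans with (Rabs phi * Rabs phi * Rabs Qp * r).
    { assert (0 <= Rabs phi * Rabs phi) by (apply Rmult_le_pos; lra). assert (0 <= c0 / 2) by lra. assert (0 <= S / 4) by lra.
      replace (Rabs phi * Rabs phi * Rabs Qp * r) with (Rabs phi * Rabs phi * (Rabs Qp * r)) by ring.
      apply Rmult_le_compat_l; auto. apply Rmult_le_compat; lra. }
    eapply Rle_trans; [exact HB|].
    replace (Rabs phi * Rabs phi * (C * Rabs phi * T ^ 3)) with (C * (Rabs phi * T) ^ 3) by ring.
    apply Rmult_le_compat_l; lra. }
  apply Rmult_le_reg_l in Hmain; [|apply Rmult_lt_0_compat; lra].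
  assert (Ephi : Rabs phi = Rabs g / N2) by (unfold phi, Rdiv; rewrite Rabs_mult, Rabs_inv, (Rabs_right N2) by lra; ring).
  rewrite Ephi in Hmain.
  assert (Hfin : C * (Rabs g / N2) * T ^ 3 <= C * eps * T ^ 3 / N2 * S).
  { replace (C * eps * T ^ 3 / N2 * S) with (C * ((eps * S) / N2) * T ^ 3) by (field; lra).
    apply Rmult_le_compat_r; [lra|]. apply Rmult_le_compat_l; [lra|].
    unfold Rdiv. apply Rmult_le_compat_r; [left; apply Rinv_0_lt_compat; lra| exact HgS]. }
  assert (C * eps * T ^ 3 / N2 * S <= c0 / 16 * S) by (apply Rmult_le_compat_r; lra).
  assert (0 < c0 * S) by (apply Rmult_lt_0_compat; lra).
  lra.
Qed.

Lemma cont_pt_of_eps (f : R -> R) x :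
  (forall eps, 0 < eps -> exists del, 0 < del /\ forall y, Rabs (y - x) < del -> Rabs (f y - f x) < eps) ->
  continuity_pt f x.
Proof.
  intros H. apply continuity_pt_locally. intros eps.
  destruct (H eps (cond_pos eps)) as [d [Hd Hf]].
  exists (mkposreal d Hd). intros y Hy. apply Hf. exact Hy.
Qed.

Lemma continuous_of_eps (f : R -> R) x :
  (forall eps, 0 < eps -> exists del, 0 < del /\ forall y, Rabs (y - x) < del -> Rabs (f y - f x) < eps) ->
  continuous f x.
Proof. intros H. apply continuity_pt_filterlim. apply cont_pt_of_eps. exact H. Qed.

Lemma eps_of_continuous (f : R -> R) x : continuous f x ->
  forall eps, 0 < eps -> exists del, 0 < del /\ forall y, Rabs (y - x) < del -> Rabs (f y - f x) < eps.
Proof.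
  intros H eps He. apply continuity_pt_filterlim in H. rewrite continuity_pt_locally in H.
  destruct (H (mkposreal eps He)) as [d Hd]. exists d. split; [apply cond_pos|].
  intros y Hy. apply (Hd y). exact Hy.
Qed.

Definition Pc1 a (nu1 nu2 s h : R) := a - s * nu2 + h * nu1.
Definition Pc2 b (nu1 nu2 s h : R) := b + s * nu1 + h * nu2.

Lemma Rabs_def2b x a : Rabs x <= a -> - a <= x <= a.
Proof. unfold Rabs; destruct Rcase_abs; intros; lra. Qed.
Lemma Rabs_def2c x a : Rabs x < a -> - a < x < a.
Proof. unfold Rabs; destruct Rcase_abs; intros; lra. Qed.

Lemma Rabs_diag s : Rabs (s - s) = 0.
Proof. rewrite Rminus_diag; apply Rabs_R0. Qed.

Lemma abs_lin2 p q u v : Rabs (p * u + q * v) <= Rabs p * Rabs u + Rabs q * Rabs v.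
Proof. eapply Rle_trans; [apply Rabs_triang|]. rewrite !Rabs_mult. lra. Qed.

Lemma M_pos nu1 nu2 : 0 < nu1 ^ 2 + nu2 ^ 2 -> 0 < Rabs nu1 + Rabs nu2.
Proof. intros H. destruct (Req_dec nu1 0) as [h1|h1].
  - destruct (Req_dec nu2 0) as [h2|h2]. subst; simpl in H; lra.
    assert (0 < Rabs nu2) by (apply Rabs_pos_lt; auto). assert (0 <= Rabs nu1) by apply Rabs_pos. lra.
  - assert (0 < Rabs nu1) by (apply Rabs_pos_lt; auto). assert (0 <= Rabs nu2) by apply Rabs_pos. lra. Qed.

Lemma ift_core G a b nu1 nu2 rho :
  SD G a b nu1 nu2 -> G a b = 0 -> 0 < nu1 ^ 2 + nu2 ^ 2 -> 0 < rho ->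
  exists eta phi, 0 < eta /\ phi 0 = 0 /\
   (forall s h, Rabs s < eta -> Rabs h < eta ->
      Rabs (Pc1 a nu1 nu2 s h - a) < rho /\ Rabs (Pc2 b nu1 nu2 s h - b) < rho) /\
   (forall s, Rabs s < eta -> Rabs (phi s) < eta /\
      G (Pc1 a nu1 nu2 s (phi s)) (Pc2 b nu1 nu2 s (phi s)) = 0) /\
   (forall s h, Rabs s < eta -> Rabs h < eta ->
      G (Pc1 a nu1 nu2 s h) (Pc2 b nu1 nu2 s h) = 0 -> h = phi s) /\
   (forall s t, Rabs s < eta -> Rabs t < eta -> Rabs (phi s - phi t) <= Rabs (s - t) / 3).
Proof.
  intros SG G0 HNu Hrho.
  set (Nu := nu1 ^ 2 + nu2 ^ 2) in *.
  assert (HM := M_pos nu1 nu2 HNu). set (M := Rabs nu1 + Rabs nu2) in *.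
  assert (P1 : 0 <= Rabs nu1) by apply Rabs_pos. assert (P2 : 0 <= Rabs nu2) by apply Rabs_pos.
  destruct (SG (Nu / (4 * M)) ltac:(apply Rdiv_lt_0_compat; lra)) as [d0 [Hd0 HS]].
  set (eta := Rmin d0 rho / (4 * M)).
  assert (Hm1 := Rmin_l d0 rho). assert (Hm2 := Rmin_r d0 rho).
  assert (Hmin : 0 < Rmin d0 rho) by (apply Rmin_glb_lt; lra).
  assert (Heta : 0 < eta) by (unfold eta; apply Rdiv_lt_0_compat; lra).
  assert (HetaM : eta * M * 2 = Rmin d0 rho / 2) by (unfold eta; field; lra).
  set (Phi := fun s h => G (Pc1 a nu1 nu2 s h) (Pc2 b nu1 nu2 s h)).
  assert (Box : forall s h, Rabs s < eta -> Rabs h < eta ->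
      Rabs (Pc1 a nu1 nu2 s h - a) < Rmin d0 rho /\ Rabs (Pc2 b nu1 nu2 s h - b) < Rmin d0 rho).
  { intros s h Hs Hh. unfold Pc1, Pc2.
    replace (a - s * nu2 + h * nu1 - a) with ((- nu2) * s + nu1 * h) by ring.
    replace (b + s * nu1 + h * nu2 - b) with (nu1 * s + nu2 * h) by ring.
    assert (T1 := abs_lin2 (- nu2) nu1 s h). assert (T2 := abs_lin2 nu1 nu2 s h). rewrite Rabs_Ropp in T1.
    assert (0 <= Rabs s) by apply Rabs_pos. assert (0 <= Rabs h) by apply Rabs_pos.
    assert (Rabs nu2 * Rabs s <= Rabs nu2 * eta) by (apply Rmult_le_compat_l; lra).
    assert (Rabs nu1 * Rabs h <= Rabs nu1 * eta) by (apply Rmult_le_compat_l; lra).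
    assert (Rabs nu1 * Rabs s <= Rabs nu1 * eta) by (apply Rmult_le_compat_l; lra).
    assert (Rabs nu2 * Rabs h <= Rabs nu2 * eta) by (apply Rmult_le_compat_l; lra).
    assert (eta * M < Rmin d0 rho) by lra. unfold M in *. split; nra. }
  assert (Est : forall s h t k, Rabs s < eta -> Rabs h < eta -> Rabs t < eta -> Rabs k < eta ->
     Rabs (Phi s h - Phi t k - Nu * (h - k)) <= Nu / 4 * (Rabs (s - t) + Rabs (h - k))).
  { intros s h t k Hs Hh Ht Hk.
    destruct (Box s h Hs Hh) as [B1 B2]. destruct (Box t k Ht Hk) as [B3 B4].
    assert (T := HS (Pc1 a nu1 nu2 s h) (Pc2 b nu1 nu2 s h) (Pc1 a nu1 nu2 t k) (Pc2 b nu1 nu2 t k) ltac:(lra) ltac:(lra) ltac:(lra) ltac:(lra)).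
    unfold Phi. replace (Nu * (h - k)) with
      (nu1 * (Pc1 a nu1 nu2 s h - Pc1 a nu1 nu2 t k) + nu2 * (Pc2 b nu1 nu2 s h - Pc2 b nu1 nu2 t k))
      by (unfold Pc1, Pc2, Nu; ring).
    eapply Rle_trans; [exact T|].
    unfold Pc1, Pc2.
    replace (a - s * nu2 + h * nu1 - (a - t * nu2 + k * nu1)) with ((- nu2) * (s - t) + nu1 * (h - k)) by ring.
    replace (b + s * nu1 + h * nu2 - (b + t * nu1 + k * nu2)) with (nu1 * (s - t) + nu2 * (h - k)) by ring.
    assert (T1 := abs_lin2 (- nu2) nu1 (s - t) (h - k)). assert (T2 := abs_lin2 nu1 nu2 (s - t) (h - k)).
    rewrite Rabs_Ropp in T1.
    replace (Nu / 4 * (Rabs (s - t) + Rabs (h - k))) with (Nu / (4 * M) * (M * (Rabs (s - t) + Rabs (h - k)))) by (field; lra).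
    apply Rmult_le_compat_l. left; apply Rdiv_lt_0_compat; lra. unfold M. lra. }
  assert (Phi00 : Phi 0 0 = 0).
  { unfold Phi, Pc1, Pc2. replace (a - 0 * nu2 + 0 * nu1) with a by ring.
    replace (b + 0 * nu1 + 0 * nu2) with b by ring. exact G0. }
  assert (Uniq : forall s h k, Rabs s < eta -> Rabs h < eta -> Rabs k < eta -> Phi s h = 0 -> Phi s k = 0 -> h = k).
  { intros s h k Hs Hh Hk E1 E2. assert (T := Est s h s k Hs Hh Hs Hk).
    rewrite E1, E2, Rabs_diag in T.
    replace (0 - 0 - Nu * (h - k)) with (- (Nu * (h - k))) in T by ring.
    rewrite Rabs_Ropp, Rabs_mult, (Rabs_right Nu) in T by lra.
    assert (0 <= Rabs (h - k)) by apply Rabs_pos.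
    assert (Rabs (h - k) = 0) by nra. apply Rabs_eq_0 in H0. lra. }
  assert (Exist : forall s, Rabs s < eta -> exists h, Rabs h < eta /\ Phi s h = 0).
  { intros s Hs.
    assert (Hs0 : Rabs (Phi s 0) <= Nu / 4 * Rabs s).
    { assert (T := Est s 0 0 0 Hs ltac:(rewrite Rabs_R0; lra) ltac:(rewrite Rabs_R0; lra) ltac:(rewrite Rabs_R0; lra)).
      rewrite Phi00 in T. replace (Phi s 0 - 0 - Nu * (0 - 0)) with (Phi s 0) in T by ring.
      replace (0 - 0) with 0 in T by ring. rewrite Rabs_R0, Rplus_0_r, Rminus_0_r in T. exact T. }
    assert (Hl : forall h, Rabs h < eta -> Rabs (Phi s h - Phi s 0 - Nu * h) <= Nu / 4 * Rabs h).
    { intros h Hh. assert (T := Est s h s 0 Hs Hh Hs ltac:(rewrite Rabs_R0; lra)).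
      rewrite Rabs_diag, Rplus_0_l, !Rminus_0_r in T. exact T. }
    assert (He2 : Rabs (eta / 2) < eta) by (rewrite Rabs_right; lra).
    assert (He2' : Rabs (- (eta / 2)) < eta) by (rewrite Rabs_Ropp, Rabs_right; lra).
    assert (Lp := Hl _ He2). assert (Lm := Hl _ He2').
    rewrite (Rabs_right (eta / 2)) in Lp by lra. rewrite (Rabs_Ropp (eta / 2)), (Rabs_right (eta / 2)) in Lm by lra.
    apply Rabs_def2b in Lp. apply Rabs_def2b in Lm. apply Rabs_def2b in Hs0.
    assert (0 <= Rabs s) by apply Rabs_pos.
    assert (Nu / 4 * Rabs s < Nu / 4 * eta) by (apply Rmult_lt_compat_l; lra).
    destruct (Ranalysis5.IVT_interv (fun h => Phi s h) (- (eta / 2)) (eta / 2)) as [z [Hz1 Hz2]].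
    - intros h Hh. apply cont_pt_of_eps. intros e He.
      exists (Rmin (eta / 2) (e / (2 * Nu))). split. apply Rmin_glb_lt; [lra| apply Rdiv_lt_0_compat; lra].
      intros y Hy. assert (Hy1 := Rmin_l (eta / 2) (e / (2 * Nu))). assert (Hy2 := Rmin_r (eta / 2) (e / (2 * Nu))).
      assert (Hhe : Rabs h < eta) by (apply Rabs_def1; lra).
      assert (Hye : Rabs y < eta).
      { apply Rabs_def2c in Hy. apply Rabs_def1; lra. }
      assert (T := Est s y s h Hs Hye Hs Hhe). rewrite Rabs_diag, Rplus_0_l in T.
      apply Rabs_def2b in T.
      assert (Ty : Rabs (y - h) < e / (2 * Nu)) by lra.
      assert (Nu * Rabs (y - h) < Nu * (e / (2 * Nu))) by (apply Rmult_lt_compat_l; lra).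
      replace (Nu * (e / (2 * Nu))) with (e / 2) in H1 by (field; lra).
      assert (TT := Rabs_triang (Phi s y - Phi s h - Nu * (y - h)) (Nu * (y - h))).
      replace (Phi s y - Phi s h - Nu * (y - h) + Nu * (y - h)) with (Phi s y - Phi s h) in TT by ring.
      rewrite Rabs_mult, (Rabs_right Nu) in TT by lra.
      assert (Rabs (Phi s y - Phi s h - Nu * (y - h)) <= Nu / 4 * Rabs (y - h)) by (apply Rabs_le; lra).
      lra.
    - lra.
    - simpl. lra.
    - simpl. lra.
    - exists z. split; [apply Rabs_def1; lra | exact Hz2]. }
  set (phi := fun s => epsilon (inhabits 0) (fun h => Rabs h < eta /\ Phi s h = 0)).
  assert (Hphi : forall s, Rabs s < eta -> Rabs (phi s) < eta /\ Phi s (phi s) = 0).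
  { intros s Hs. unfold phi. apply epsilon_spec. apply Exist; auto. }
  assert (H0e : Rabs 0 < eta) by (rewrite Rabs_R0; lra).
  exists eta, phi. split; [exact Heta|]. split.
  { destruct (Hphi 0 H0e) as [A1 A2]. symmetry. apply (Uniq 0 0 (phi 0)); auto. }
  split.
  { intros s h Hs Hh. destruct (Box s h Hs Hh). split; lra. }
  split; [exact Hphi|]. split.
  { intros s h Hs Hh E. destruct (Hphi s Hs) as [A1 A2]. apply (Uniq s); auto. }
  intros s t Hs Ht. destruct (Hphi s Hs) as [A1 A2]. destruct (Hphi t Ht) as [A3 A4].
  assert (T := Est s (phi s) t (phi t) Hs A1 Ht A3). fold Phi in A2, A4. rewrite A2, A4 in T.
  replace (0 - 0 - Nu * (phi s - phi t)) with (- (Nu * (phi s - phi t))) in T by ring.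
  rewrite Rabs_Ropp, Rabs_mult, (Rabs_right Nu) in T by lra.
  assert (X : 3 * Rabs (phi s - phi t) - Rabs (s - t) <= 0).
  { destruct (Rle_lt_dec (3 * Rabs (phi s - phi t) - Rabs (s - t)) 0) as [l|l]; auto.
    assert (0 < Nu * (3 * Rabs (phi s - phi t) - Rabs (s - t))) by (apply Rmult_lt_0_compat; lra). lra. }
  lra.
Qed.

Definition dphi_of (gx gy : R -> R -> R) a b nu1 nu2 (phi : R -> R) s :=
  - (gy (Pc1 a nu1 nu2 s (phi s)) (Pc2 b nu1 nu2 s (phi s)) * nu1 - gx (Pc1 a nu1 nu2 s (phi s)) (Pc2 b nu1 nu2 s (phi s)) * nu2) /
    (gx (Pc1 a nu1 nu2 s (phi s)) (Pc2 b nu1 nu2 s (phi s)) * nu1 + gy (Pc1 a nu1 nu2 s (phi s)) (Pc2 b nu1 nu2 s (phi s)) * nu2).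

Lemma beta_pos gx1 gy1 nu1 nu2 : 0 < nu1 ^ 2 + nu2 ^ 2 ->
  Rabs (gx1 - nu1) <= (nu1 ^ 2 + nu2 ^ 2) / (2 * (Rabs nu1 + Rabs nu2)) ->
  Rabs (gy1 - nu2) <= (nu1 ^ 2 + nu2 ^ 2) / (2 * (Rabs nu1 + Rabs nu2)) ->
  (nu1 ^ 2 + nu2 ^ 2) / 2 <= gx1 * nu1 + gy1 * nu2.
Proof.
  intros HNu H1 H2. assert (HM := M_pos nu1 nu2 HNu).
  set (c := (nu1 ^ 2 + nu2 ^ 2) / (2 * (Rabs nu1 + Rabs nu2))) in *.
  assert (T := abs_lin2 (gx1 - nu1) (gy1 - nu2) nu1 nu2).
  assert (0 <= Rabs nu1) by apply Rabs_pos. assert (0 <= Rabs nu2) by apply Rabs_pos.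
  assert (Rabs (gx1 - nu1) * Rabs nu1 <= c * Rabs nu1) by (apply Rmult_le_compat_r; auto).
  assert (Rabs (gy1 - nu2) * Rabs nu2 <= c * Rabs nu2) by (apply Rmult_le_compat_r; auto).
  assert (E : c * Rabs nu1 + c * Rabs nu2 = (nu1 ^ 2 + nu2 ^ 2) / 2) by (unfold c; field; lra).
  apply Rabs_def2b in T.
  replace ((gx1 - nu1) * nu1 + (gy1 - nu2) * nu2) with (gx1 * nu1 + gy1 * nu2 - (nu1 ^ 2 + nu2 ^ 2)) in T by ring.
  lra.
Qed.

Lemma ift_deriv G gx gy a b nu1 nu2 rho eta (phi : R -> R) :
  0 < nu1 ^ 2 + nu2 ^ 2 -> 0 < eta ->
  (forall s h, Rabs s < eta -> Rabs h < eta ->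
      Rabs (Pc1 a nu1 nu2 s h - a) < rho /\ Rabs (Pc2 b nu1 nu2 s h - b) < rho) ->
  (forall s, Rabs s < eta -> Rabs (phi s) < eta /\
      G (Pc1 a nu1 nu2 s (phi s)) (Pc2 b nu1 nu2 s (phi s)) = 0) ->
  (forall s t, Rabs s < eta -> Rabs t < eta -> Rabs (phi s - phi t) <= Rabs (s - t) / 3) ->
  (forall x y, Rabs (x - a) < rho -> Rabs (y - b) < rho -> SD G x y (gx x y) (gy x y)) ->
  (forall x y, Rabs (x - a) < rho -> Rabs (y - b) < rho ->
     Rabs (gx x y - nu1) <= (nu1 ^ 2 + nu2 ^ 2) / (2 * (Rabs nu1 + Rabs nu2)) /\
     Rabs (gy x y - nu2) <= (nu1 ^ 2 + nu2 ^ 2) / (2 * (Rabs nu1 + Rabs nu2))) ->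
  forall s0, Rabs s0 < eta -> is_derive phi s0 (dphi_of gx gy a b nu1 nu2 phi s0).
Proof.
  intros HNu Heta HB Hphi HL HSD Hg s0 Hs0.
  assert (HM := M_pos nu1 nu2 HNu). set (M := Rabs nu1 + Rabs nu2) in *.
  assert (P1 : 0 <= Rabs nu1) by apply Rabs_pos. assert (P2 : 0 <= Rabs nu2) by apply Rabs_pos.
  destruct (Hphi s0 Hs0) as [Hp0 G0].
  set (x1 := Pc1 a nu1 nu2 s0 (phi s0)). set (y1 := Pc2 b nu1 nu2 s0 (phi s0)).
  destruct (HB s0 (phi s0) Hs0 Hp0) as [Bx By]. fold x1 y1 in Bx, By.
  destruct (Hg x1 y1 Bx By) as [Gx Gy].
  set (al := gy x1 y1 * nu1 - gx x1 y1 * nu2). set (be := gx x1 y1 * nu1 + gy x1 y1 * nu2).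
  assert (Hbe : (nu1 ^ 2 + nu2 ^ 2) / 2 <= be) by (apply beta_pos; auto).
  assert (Hbe0 : 0 < be) by lra.
  assert (Edp : dphi_of gx gy a b nu1 nu2 phi s0 = - al / be) by reflexivity.
  rewrite Edp. apply is_derive_Reals. intros e He.
  set (e' := e * be / (2 * M)).
  assert (He' : 0 < e') by (unfold e'; apply Rdiv_lt_0_compat; [apply Rmult_lt_0_compat|]; lra).
  destruct (HSD x1 y1 Bx By e' He') as [d1 [Hd1 HS]].
  set (dl := Rmin (eta - Rabs s0) (3 * d1 / (4 * M)) / 2).
  assert (Hdl : 0 < dl) by (unfold dl; apply Rdiv_lt_0_compat; [apply Rmin_glb_lt; [lra| apply Rdiv_lt_0_compat; lra]| lra]).
  exists (mkposreal dl Hdl). intros h Hh0 Hh. simpl in Hh.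
  assert (Hm1 := Rmin_l (eta - Rabs s0) (3 * d1 / (4 * M))). assert (Hm2 := Rmin_r (eta - Rabs s0) (3 * d1 / (4 * M))).
  assert (Ht : Rabs (s0 + h) < eta).
  { eapply Rle_lt_trans; [apply Rabs_triang|]. unfold dl in Hh. lra. }
  destruct (Hphi (s0 + h) Ht) as [Hpt Gt].
  assert (Lip := HL (s0 + h) s0 Ht Hs0). replace (s0 + h - s0) with h in Lip by ring.
  set (dp := phi (s0 + h) - phi s0) in *.
  set (x2 := Pc1 a nu1 nu2 (s0 + h) (phi (s0 + h))). set (y2 := Pc2 b nu1 nu2 (s0 + h) (phi (s0 + h))).
  assert (Dx : x2 - x1 = (- nu2) * h + nu1 * dp) by (unfold x2, x1, dp, Pc1; ring).
  assert (Dy : y2 - y1 = nu1 * h + nu2 * dp) by (unfold y2, y1, dp, Pc2; ring).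
  assert (Ph : 0 <= Rabs h) by apply Rabs_pos.
  assert (BDx : Rabs (x2 - x1) + Rabs (y2 - y1) <= M * (4 / 3 * Rabs h)).
  { rewrite Dx, Dy. assert (T1 := abs_lin2 (- nu2) nu1 h dp). assert (T2 := abs_lin2 nu1 nu2 h dp).
    rewrite Rabs_Ropp in T1.
    assert (0 <= Rabs dp) by apply Rabs_pos.
    assert (Rabs nu2 * Rabs dp <= Rabs nu2 * (Rabs h / 3)) by (apply Rmult_le_compat_l; lra).
    assert (Rabs nu1 * Rabs dp <= Rabs nu1 * (Rabs h / 3)) by (apply Rmult_le_compat_l; lra).
    replace (M * (4 / 3 * Rabs h)) with (Rabs nu2 * Rabs h + Rabs nu1 * (Rabs h / 3) + (Rabs nu1 * Rabs h + Rabs nu2 * (Rabs h / 3))) by (unfold M; field).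
    lra. }
  assert (Hclose : M * (4 / 3 * Rabs h) < d1).
  { assert (Rabs h < 3 * d1 / (4 * M) / 2) by (unfold dl in Hh; lra).
    apply Rlt_le_trans with (M * (4 / 3 * (3 * d1 / (4 * M) / 2))).
    apply Rmult_lt_compat_l; lra.
    replace (M * (4 / 3 * (3 * d1 / (4 * M) / 2))) with (d1 / 2) by (field; lra). lra. }
  assert (Hx2 : Rabs (x2 - x1) < d1) by (assert (0 <= Rabs (y2 - y1)) by apply Rabs_pos; lra).
  assert (Hy2 : Rabs (y2 - y1) < d1) by (assert (0 <= Rabs (x2 - x1)) by apply Rabs_pos; lra).
  assert (Z : Rabs (x1 - x1) < d1) by (rewrite Rabs_diag; lra).
  assert (Z' : Rabs (y1 - y1) < d1) by (rewrite Rabs_diag; lra).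
  assert (T := HS x2 y2 x1 y1 Hx2 Hy2 Z Z').
  fold x2 y2 in Gt. fold x1 y1 in G0. rewrite Gt, G0 in T.
  replace (0 - 0 - (gx x1 y1 * (x2 - x1) + gy x1 y1 * (y2 - y1))) with (- (h * al + dp * be)) in T
    by (rewrite Dx, Dy; unfold al, be; ring).
  rewrite Rabs_Ropp in T.
  assert (T2 : Rabs (h * al + dp * be) <= e' * (M * (4 / 3 * Rabs h))).
  { eapply Rle_trans; [exact T|]. apply Rmult_le_compat_l; lra. }
  replace (dp / h - - al / be) with ((h * al + dp * be) / (h * be)) by (field; split; lra).
  unfold Rdiv at 1. rewrite Rabs_mult, Rabs_inv, Rabs_mult, (Rabs_right be) by lra.
  assert (Pha : 0 < Rabs h) by (apply Rabs_pos_lt; auto).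
  apply Rle_lt_trans with (e' * (M * (4 / 3 * Rabs h)) * / (Rabs h * be)).
  apply Rmult_le_compat_r; [left; apply Rinv_0_lt_compat; apply Rmult_lt_0_compat; lra| exact T2].
  replace (e' * (M * (4 / 3 * Rabs h)) * / (Rabs h * be)) with (2 / 3 * e) by (unfold e'; field; lra).
  lra.
Qed.

Lemma comp_cont (F : R -> R -> R) a b nu1 nu2 eta (phi : R -> R) s0 :
  0 < nu1 ^ 2 + nu2 ^ 2 -> Rabs s0 < eta ->
  (forall s t, Rabs s < eta -> Rabs t < eta -> Rabs (phi s - phi t) <= Rabs (s - t) / 3) ->
  (forall eps, 0 < eps -> exists del, 0 < del /\ forall u v,
     Rabs (u - Pc1 a nu1 nu2 s0 (phi s0)) < del -> Rabs (v - Pc2 b nu1 nu2 s0 (phi s0)) < del ->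
     Rabs (F u v - F (Pc1 a nu1 nu2 s0 (phi s0)) (Pc2 b nu1 nu2 s0 (phi s0))) < eps) ->
  continuity_pt (fun s => F (Pc1 a nu1 nu2 s (phi s)) (Pc2 b nu1 nu2 s (phi s))) s0.
Proof.
  intros HNu Hs0 HL HF. apply cont_pt_of_eps. intros e He.
  assert (HM := M_pos nu1 nu2 HNu). set (M := Rabs nu1 + Rabs nu2) in *.
  assert (P1 : 0 <= Rabs nu1) by apply Rabs_pos. assert (P2 : 0 <= Rabs nu2) by apply Rabs_pos.
  destruct (HF e He) as [d [Hd HFd]].
  exists (Rmin (eta - Rabs s0) (d / (2 * M))). split.
  { apply Rmin_glb_lt; [lra| apply Rdiv_lt_0_compat; lra]. }
  intros t Ht. assert (Hm1 := Rmin_l (eta - Rabs s0) (d / (2 * M))). assert (Hm2 := Rmin_r (eta - Rabs s0) (d / (2 * M))).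
  assert (Hte : Rabs t < eta).
  { replace t with (s0 + (t - s0)) by ring. eapply Rle_lt_trans; [apply Rabs_triang|]. lra. }
  assert (Lip := HL t s0 Hte Hs0).
  assert (0 <= Rabs (phi t - phi s0)) by apply Rabs_pos.
  assert (0 <= Rabs (t - s0)) by apply Rabs_pos.
  assert (Bd : M * (Rabs (t - s0) + Rabs (phi t - phi s0)) < d).
  { apply Rle_lt_trans with (M * (2 * Rabs (t - s0))). apply Rmult_le_compat_l; lra.
    apply Rlt_le_trans with (M * (2 * (d / (2 * M)))). apply Rmult_lt_compat_l; lra.
    right; field; lra. }
  apply HFd.
  - unfold Pc1. replace (a - t * nu2 + phi t * nu1 - (a - s0 * nu2 + phi s0 * nu1)) with ((- nu2) * (t - s0) + nu1 * (phi t - phi s0)) by ring.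
    eapply Rle_lt_trans; [apply abs_lin2|]. rewrite Rabs_Ropp.
    assert (Rabs nu2 * Rabs (t - s0) <= M * Rabs (t - s0)) by (apply Rmult_le_compat_r; unfold M; lra).
    assert (Rabs nu1 * Rabs (phi t - phi s0) <= M * Rabs (phi t - phi s0)) by (apply Rmult_le_compat_r; unfold M; lra).
    lra.
  - unfold Pc2. replace (b + t * nu1 + phi t * nu2 - (b + s0 * nu1 + phi s0 * nu2)) with (nu1 * (t - s0) + nu2 * (phi t - phi s0)) by ring.
    eapply Rle_lt_trans; [apply abs_lin2|].
    assert (Rabs nu1 * Rabs (t - s0) <= M * Rabs (t - s0)) by (apply Rmult_le_compat_r; unfold M; lra).
    assert (Rabs nu2 * Rabs (phi t - phi s0) <= M * Rabs (phi t - phi s0)) by (apply Rmult_le_compat_r; unfold M; lra).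
    lra.
Qed.

Lemma dphi_cont gx gy a b nu1 nu2 rho eta (phi : R -> R) :
  0 < nu1 ^ 2 + nu2 ^ 2 ->
  (forall s h, Rabs s < eta -> Rabs h < eta ->
      Rabs (Pc1 a nu1 nu2 s h - a) < rho /\ Rabs (Pc2 b nu1 nu2 s h - b) < rho) ->
  (forall s, Rabs s < eta -> Rabs (phi s) < eta) ->
  (forall s t, Rabs s < eta -> Rabs t < eta -> Rabs (phi s - phi t) <= Rabs (s - t) / 3) ->
  (forall x y, Rabs (x - a) < rho -> Rabs (y - b) < rho -> cont2 gx x y /\ cont2 gy x y) ->
  (forall x y, Rabs (x - a) < rho -> Rabs (y - b) < rho ->
     Rabs (gx x y - nu1) <= (nu1 ^ 2 + nu2 ^ 2) / (2 * (Rabs nu1 + Rabs nu2)) /\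
     Rabs (gy x y - nu2) <= (nu1 ^ 2 + nu2 ^ 2) / (2 * (Rabs nu1 + Rabs nu2))) ->
  forall s0, Rabs s0 < eta -> continuity_pt (dphi_of gx gy a b nu1 nu2 phi) s0.
Proof.
  intros HNu HB Hphi HL Hc Hg s0 Hs0.
  destruct (HB s0 (phi s0) Hs0 (Hphi s0 Hs0)) as [Bx By].
  destruct (Hc _ _ Bx By) as [Cx Cy].
  assert (Kx := comp_cont gx a b nu1 nu2 eta phi s0 HNu Hs0 HL (cont2_eps _ _ _ Cx)).
  assert (Ky := comp_cont gy a b nu1 nu2 eta phi s0 HNu Hs0 HL (cont2_eps _ _ _ Cy)).
  set (kx := fun s => gx (Pc1 a nu1 nu2 s (phi s)) (Pc2 b nu1 nu2 s (phi s))) in *.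
  set (ky := fun s => gy (Pc1 a nu1 nu2 s (phi s)) (Pc2 b nu1 nu2 s (phi s))) in *.
  destruct (Hg _ _ Bx By) as [G1 G2].
  assert (Hbe := beta_pos _ _ nu1 nu2 HNu G1 G2).
  change (continuity_pt (fun s => - (ky s * nu1 - kx s * nu2) / (kx s * nu1 + ky s * nu2)) s0).
  apply (continuity_pt_div (fun s => - (ky s * nu1 - kx s * nu2)) (fun s => kx s * nu1 + ky s * nu2)).
  - apply (continuity_pt_opp (fun s => ky s * nu1 - kx s * nu2)).
    apply (continuity_pt_minus (fun s => ky s * nu1) (fun s => kx s * nu2)).
    + apply (continuity_pt_mult ky (fun _ => nu1)); [exact Ky| apply continuity_pt_const; intros u v; reflexivity].
    + apply (continuity_pt_mult kx (fun _ => nu2)); [exact Kx| apply continuity_pt_const; intros u v; reflexivity].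
  - apply (continuity_pt_plus (fun s => kx s * nu1) (fun s => ky s * nu2)).
    + apply (continuity_pt_mult kx (fun _ => nu1)); [exact Kx| apply continuity_pt_const; intros u v; reflexivity].
    + apply (continuity_pt_mult ky (fun _ => nu2)); [exact Ky| apply continuity_pt_const; intros u v; reflexivity].
  - unfold kx, ky. simpl. lra.
Qed.

Lemma dist2_lt_iff x y a b d : 0 < d ->
  (dist2 x y a b < d <-> (x - a) ^ 2 + (y - b) ^ 2 < d ^ 2).
Proof.
  intros Hd. unfold dist2. assert (E : sqrt (d ^ 2) = d) by (apply sqrt_pow2; lra).
  assert (0 <= (x - a) ^ 2) by apply pow2_ge_0. assert (0 <= (y - b) ^ 2) by apply pow2_ge_0.
  split; intros Hq.
  - apply sqrt_lt_0_alt. rewrite E. exact Hq.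
  - rewrite <- E. apply sqrt_lt_1_alt. split; lra.
Qed.

Definition psi e1 e2 t := 2 * e1 * e2 * t / ((e1 + e2) + (e1 - e2) * t).
Definition dpsi e1 e2 t := 2 * e1 * e2 * (e1 + e2) / ((e1 + e2) + (e1 - e2) * t) ^ 2.

Lemma psi_den e1 e2 t : 0 < e1 -> 0 < e2 -> -1 < t < 1 -> 0 < (e1 + e2) + (e1 - e2) * t.
Proof. intros. replace ((e1 + e2) + (e1 - e2) * t) with (e1 * (1 + t) + e2 * (1 - t)) by ring.
  assert (0 < e1 * (1 + t)) by (apply Rmult_lt_0_compat; lra).
  assert (0 < e2 * (1 - t)) by (apply Rmult_lt_0_compat; lra). lra. Qed.

Lemma psi_range e1 e2 t : 0 < e1 -> 0 < e2 -> -1 < t < 1 -> - e1 < psi e1 e2 t < e2.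
Proof.
  intros H1 H2 Ht. assert (Hd := psi_den e1 e2 t H1 H2 Ht).
  set (den := (e1 + e2) + (e1 - e2) * t) in *. unfold psi. fold den.
  split.
  - apply Rmult_lt_reg_r with den; auto. unfold Rdiv. rewrite Rmult_assoc, Rinv_l, Rmult_1_r by lra.
    assert (E : 2 * e1 * e2 * t - (- e1 * den) = e1 * ((e1 + e2) * (1 + t))) by (unfold den; ring).
    assert (0 < e1 * ((e1 + e2) * (1 + t))) by (apply Rmult_lt_0_compat; [lra| apply Rmult_lt_0_compat; lra]). lra.
  - apply Rmult_lt_reg_r with den; auto. unfold Rdiv. rewrite Rmult_assoc, Rinv_l, Rmult_1_r by lra.
    assert (E : e2 * den - 2 * e1 * e2 * t = e2 * ((e1 + e2) * (1 - t))) by (unfold den; ring).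
    assert (0 < e2 * ((e1 + e2) * (1 - t))) by (apply Rmult_lt_0_compat; [lra| apply Rmult_lt_0_compat; lra]). lra.
Qed.

Lemma psi_inj e1 e2 s t : 0 < e1 -> 0 < e2 -> -1 < s < 1 -> -1 < t < 1 -> psi e1 e2 s = psi e1 e2 t -> s = t.
Proof.
  intros H1 H2 Hs Ht E. assert (Ds := psi_den e1 e2 s H1 H2 Hs). assert (Dt := psi_den e1 e2 t H1 H2 Ht).
  unfold psi in E. apply (f_equal (fun z => z * ((e1 + e2) + (e1 - e2) * s) * ((e1 + e2) + (e1 - e2) * t))) in E.
  replace (2 * e1 * e2 * s / (e1 + e2 + (e1 - e2) * s) * (e1 + e2 + (e1 - e2) * s) * (e1 + e2 + (e1 - e2) * t))
    with (2 * e1 * e2 * (s * (e1 + e2 + (e1 - e2) * t))) in E by (field; lra).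
  replace (2 * e1 * e2 * t / (e1 + e2 + (e1 - e2) * t) * (e1 + e2 + (e1 - e2) * s) * (e1 + e2 + (e1 - e2) * t))
    with (2 * e1 * e2 * (t * (e1 + e2 + (e1 - e2) * s))) in E by (field; lra).
  assert (P : 0 < 2 * e1 * e2) by (apply Rmult_lt_0_compat; [apply Rmult_lt_0_compat|]; lra).
  apply Rmult_eq_reg_l in E; [|lra].
  assert (E2 : (e1 + e2) * (s - t) = 0) by (rewrite Rmult_minus_distr_l; lra).
  apply Rmult_integral in E2. destruct E2 as [Z|Z]; lra.
Qed.

Lemma psi_surj e1 e2 s : 0 < e1 -> 0 < e2 -> - e1 < s < e2 -> exists t, -1 < t < 1 /\ psi e1 e2 t = s.
Proof.
  intros H1 H2 Hs.
  set (dd := 2 * e1 * e2 - (e1 - e2) * s).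
  assert (Hdd : 0 < dd).
  { unfold dd. replace (2 * e1 * e2 - (e1 - e2) * s) with (e1 * (e2 - s) + e2 * (e1 + s)) by ring.
    assert (0 < e1 * (e2 - s)) by (apply Rmult_lt_0_compat; lra).
    assert (0 < e2 * (e1 + s)) by (apply Rmult_lt_0_compat; lra). lra. }
  exists (s * (e1 + e2) / dd). split; [split|].
  - apply Rmult_lt_reg_r with dd; auto. unfold Rdiv. rewrite Rmult_assoc, Rinv_l, Rmult_1_r by lra.
    assert (E3 : s * (e1 + e2) + dd = (s + e1) * (2 * e2)) by (unfold dd; ring).
    assert (0 < (s + e1) * (2 * e2)) by (apply Rmult_lt_0_compat; lra). lra.
  - apply Rmult_lt_reg_r with dd; auto. unfold Rdiv. rewrite Rmult_assoc, Rinv_l, Rmult_1_r by lra.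
    assert (E3 : dd - s * (e1 + e2) = (e2 - s) * (2 * e1)) by (unfold dd; ring).
    assert (0 < (e2 - s) * (2 * e1)) by (apply Rmult_lt_0_compat; lra). lra.
  - unfold psi.
    assert (P : 0 < e1 * e2) by (apply Rmult_lt_0_compat; lra).
    replace ((e1 + e2) + (e1 - e2) * (s * (e1 + e2) / dd)) with ((e1 + e2) * (2 * e1 * e2) / dd)
      by (unfold dd in *; field; lra).
    field. split; [lra| split; lra].
Qed.

Lemma psi_deriv e1 e2 t : 0 < e1 -> 0 < e2 -> -1 < t < 1 -> is_derive (psi e1 e2) t (dpsi e1 e2 t).
Proof.
  intros H1 H2 Ht. assert (Hd := psi_den e1 e2 t H1 H2 Ht).
  unfold psi, dpsi. auto_derive. lra. field. lra.
Qed.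

Lemma dpsi_pos e1 e2 t : 0 < e1 -> 0 < e2 -> -1 < t < 1 -> 0 < dpsi e1 e2 t.
Proof.
  intros H1 H2 Ht. assert (Hd := psi_den e1 e2 t H1 H2 Ht). unfold dpsi.
  apply Rdiv_lt_0_compat. apply Rmult_lt_0_compat; [apply Rmult_lt_0_compat; [apply Rmult_lt_0_compat|]|]; lra.
  apply pow_lt; lra.
Qed.

Lemma dpsi_cont e1 e2 t : 0 < e1 -> 0 < e2 -> -1 < t < 1 -> continuity_pt (dpsi e1 e2) t.
Proof.
  intros H1 H2 Ht. assert (Hd := psi_den e1 e2 t H1 H2 Ht).
  apply continuity_pt_filterlim. apply (ex_derive_continuous (dpsi e1 e2)).
  unfold dpsi. auto_derive. rewrite Rmult_1_r. apply Rgt_not_eq. apply Rmult_lt_0_compat; lra.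
Qed.

Lemma psi_cont e1 e2 t : 0 < e1 -> 0 < e2 -> -1 < t < 1 -> continuity_pt (psi e1 e2) t.
Proof.
  intros H1 H2 Ht. apply continuity_pt_filterlim. apply (ex_derive_continuous (psi e1 e2)).
  exists (dpsi e1 e2 t). apply psi_deriv; auto.
Qed.

Lemma psi0 e1 e2 : 0 < e1 -> 0 < e2 -> psi e1 e2 0 = 0.
Proof. intros. unfold psi. field. lra. Qed.

Lemma locally_of_eps (t e : R) (P : R -> Prop) : 0 < e -> (forall y, Rabs (y - t) < e -> P y) -> locally t P.
Proof. intros He H. exists (mkposreal e He). intros y Hy. apply H. exact Hy. Qed.

Lemma r_mono (phi : R -> R) eta s t : phi 0 = 0 ->
  (forall s t, Rabs s < eta -> Rabs t < eta -> Rabs (phi s - phi t) <= Rabs (s - t) / 3) ->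
  Rabs s < eta -> Rabs t < eta -> Rabs (t - s) = Rabs t - Rabs s -> Rabs s < Rabs t ->
  s ^ 2 + phi s ^ 2 < t ^ 2 + phi t ^ 2.
Proof.
  intros H0 HL Hs Ht Hts Hlt.
  assert (Z : Rabs 0 < eta) by (rewrite Rabs_R0; assert (T := Rabs_pos s); lra).
  assert (Ps : Rabs (phi s) <= Rabs s / 3) by (assert (T := HL s 0 Hs Z); rewrite H0, !Rminus_0_r in T; exact T).
  assert (Pt : Rabs (phi t) <= Rabs t / 3) by (assert (T := HL t 0 Ht Z); rewrite H0, !Rminus_0_r in T; exact T).
  assert (D : Rabs (phi t - phi s) <= (Rabs t - Rabs s) / 3) by (rewrite <- Hts; apply HL; auto).
  assert (Sm : Rabs (phi t + phi s) <= (Rabs t + Rabs s) / 3).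
  { eapply Rle_trans; [apply Rabs_triang|]. lra. }
  assert (P1 : 0 <= Rabs (phi t - phi s)) by apply Rabs_pos. assert (P2 : 0 <= Rabs (phi t + phi s)) by apply Rabs_pos.
  assert (P3 : 0 <= Rabs s) by apply Rabs_pos.
  assert (Prod : Rabs ((phi t - phi s) * (phi t + phi s)) <= (Rabs t - Rabs s) / 3 * ((Rabs t + Rabs s) / 3)).
  { rewrite Rabs_mult. apply Rmult_le_compat; auto. }
  apply Rabs_def2b in Prod.
  assert (Et : t ^ 2 = Rabs t * Rabs t) by (unfold Rabs; destruct Rcase_abs; ring).
  assert (Es : s ^ 2 = Rabs s * Rabs s) by (unfold Rabs; destruct Rcase_abs; ring).
  assert (Pos : 0 < (Rabs t - Rabs s) * (Rabs t + Rabs s)) by (apply Rmult_lt_0_compat; lra).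
  replace (t ^ 2 + phi t ^ 2) with (s ^ 2 + phi s ^ 2 + ((Rabs t - Rabs s) * (Rabs t + Rabs s) + (phi t - phi s) * (phi t + phi s)))
    by (rewrite Et, Es; ring).
  assert (E9 : (Rabs t - Rabs s) / 3 * ((Rabs t + Rabs s) / 3) = (Rabs t - Rabs s) * (Rabs t + Rabs s) / 9) by field.
  lra.
Qed.


Lemma deriv_Pc1 a nu1 nu2 (f k : R -> R) t df dk : is_derive f t df -> is_derive k t dk ->
  is_derive (fun t => Pc1 a nu1 nu2 (f t) (k t)) t (- df * nu2 + dk * nu1).
Proof.
  intros Hf Hk. unfold Pc1.
  assert (Ef : Derive f t = df) by (apply is_derive_unique; exact Hf).
  assert (Ek : Derive k t = dk) by (apply is_derive_unique; exact Hk).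
  auto_derive.
  - repeat split; try (eexists; eassumption).
  - change (fun x : R => f x) with f. change (fun x : R => k x) with k. rewrite Ef, Ek. ring.
Qed.

Lemma deriv_Pc2 b nu1 nu2 (f k : R -> R) t df dk : is_derive f t df -> is_derive k t dk ->
  is_derive (fun t => Pc2 b nu1 nu2 (f t) (k t)) t (df * nu1 + dk * nu2).
Proof.
  intros Hf Hk. unfold Pc2.
  assert (Ef : Derive f t = df) by (apply is_derive_unique; exact Hf).
  assert (Ek : Derive k t = dk) by (apply is_derive_unique; exact Hk).
  auto_derive.
  - repeat split; try (eexists; eassumption).
  - change (fun x : R => f x) with f. change (fun x : R => k x) with k. rewrite Ef, Ek. ring.
Qed.

Lemma Pc_sq a b nu1 nu2 s h :
  (Pc1 a nu1 nu2 s h - a) ^ 2 + (Pc2 b nu1 nu2 s h - b) ^ 2 = (nu1 ^ 2 + nu2 ^ 2) * (s ^ 2 + h ^ 2).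
Proof. unfold Pc1, Pc2. ring. Qed.

Lemma contD e1 e2 (dphi : R -> R) p q t : 0 < e1 -> 0 < e2 -> -1 < t < 1 ->
  continuity_pt dphi (psi e1 e2 t) ->
  continuity_pt (fun t => p * dpsi e1 e2 t + q * (dpsi e1 e2 t * dphi (psi e1 e2 t))) t.
Proof.
  intros H1 H2 Ht Hc.
  assert (C1 := dpsi_cont e1 e2 t H1 H2 Ht).
  assert (C2 : continuity_pt (fun t => dphi (psi e1 e2 t)) t).
  { change (continuity_pt (comp dphi (psi e1 e2)) t). apply continuity_pt_comp; auto. apply psi_cont; auto. }
  apply (continuity_pt_plus (fun t => p * dpsi e1 e2 t) (fun t => q * (dpsi e1 e2 t * dphi (psi e1 e2 t)))).
  - apply (continuity_pt_mult (fun _ => p) (dpsi e1 e2)); auto. apply continuity_pt_const; intros u v; reflexivity.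
  - apply (continuity_pt_mult (fun _ => q) (fun t => dpsi e1 e2 t * dphi (psi e1 e2 t))).
    apply continuity_pt_const; intros u v; reflexivity.
    apply (continuity_pt_mult (dpsi e1 e2) (fun t => dphi (psi e1 e2 t))); auto.
Qed.

Lemma sq_div4 u v : (u * v / 4) ^ 2 = u ^ 2 * v ^ 2 / 16.
Proof. field. Qed.

Lemma curve_build (G : R -> R -> R) (phi dphi : R -> R) a b nu1 nu2 eta dmax :
  0 < nu1 ^ 2 + nu2 ^ 2 -> 0 < eta -> 0 < dmax -> phi 0 = 0 ->
  (forall s, Rabs s < eta -> Rabs (phi s) < eta /\
      G (Pc1 a nu1 nu2 s (phi s)) (Pc2 b nu1 nu2 s (phi s)) = 0) ->
  (forall s h, Rabs s < eta -> Rabs h < eta ->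
      G (Pc1 a nu1 nu2 s h) (Pc2 b nu1 nu2 s h) = 0 -> h = phi s) ->
  (forall s t, Rabs s < eta -> Rabs t < eta -> Rabs (phi s - phi t) <= Rabs (s - t) / 3) ->
  (forall s, Rabs s < eta -> is_derive phi s (dphi s)) ->
  (forall s, Rabs s < eta -> continuity_pt dphi s) ->
  exists d, 0 < d /\ d <= dmax /\ exists g1 g2 e, C1_curve_through g1 g2 e a b /\
    (forall t, -e < t < e -> dist2 (g1 t) (g2 t) a b < d) /\
    (forall x y, dist2 x y a b < d ->
       (G x y = 0 <-> exists t, -e < t < e /\ g1 t = x /\ g2 t = y)).
Proof.
  intros HNu Heta Hdmax H0 Hphi Huniq HL Hder Hdc.
  set (Nu := nu1 ^ 2 + nu2 ^ 2) in *.
  assert (HM := M_pos nu1 nu2 HNu). set (M := Rabs nu1 + Rabs nu2) in *.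
  assert (Pn1 : 0 <= Rabs nu1) by apply Rabs_pos. assert (Pn2 : 0 <= Rabs nu2) by apply Rabs_pos.
  assert (HsN : 0 < sqrt Nu) by (apply sqrt_lt_R0; lra).
  set (d := Rmin dmax (Rmin (sqrt Nu * eta / 4) (Nu * eta / (2 * M)))).
  assert (Hd1 := Rmin_l dmax (Rmin (sqrt Nu * eta / 4) (Nu * eta / (2 * M)))).
  assert (Hd2 := Rmin_r dmax (Rmin (sqrt Nu * eta / 4) (Nu * eta / (2 * M)))).
  assert (Hd3 := Rmin_l (sqrt Nu * eta / 4) (Nu * eta / (2 * M))).
  assert (Hd4 := Rmin_r (sqrt Nu * eta / 4) (Nu * eta / (2 * M))).
  fold d in Hd1, Hd2.
  assert (Hd : 0 < d).
  { unfold d. apply Rmin_glb_lt; [lra| apply Rmin_glb_lt; apply Rdiv_lt_0_compat; try apply Rmult_lt_0_compat; lra]. }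
  set (c := d ^ 2 / Nu).
  assert (Hc : 0 < c) by (unfold c; apply Rdiv_lt_0_compat; [apply pow_lt|]; lra).
  assert (Hc16 : c <= eta ^ 2 / 16).
  { unfold c. assert (W1 : d <= sqrt Nu * eta / 4) by lra.
    assert (H : d ^ 2 <= (sqrt Nu * eta / 4) ^ 2) by (apply pow_incr; lra).
    rewrite sq_div4 in H.
    rewrite pow2_sqrt in H by lra.
    apply Rle_trans with (Nu * eta ^ 2 / 16 / Nu). unfold Rdiv at 1 3. apply Rmult_le_compat_r.
    left; apply Rinv_0_lt_compat; lra. lra. right; field; lra. }
  set (r := fun s => s ^ 2 + phi s ^ 2).
  assert (Hr0 : r 0 = 0) by (unfold r; rewrite H0; ring).
  assert (Hrc : forall s, Rabs s < eta -> continuity_pt r s).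
  { intros s Hs. apply continuity_pt_filterlim. apply (ex_derive_continuous r).
    unfold r. auto_derive. repeat split; exists (dphi s); apply Hder; auto. }
  assert (Hrlow : forall s, s ^ 2 <= r s) by (intros; unfold r; assert (0 <= phi s ^ 2) by apply pow2_ge_0; lra).
  assert (Heta2 : c < (eta / 2) ^ 2) by (replace ((eta / 2) ^ 2) with (eta ^ 2 / 4) by field; assert (0 < eta ^ 2) by (apply pow_lt; lra); lra).
  destruct (Ranalysis5.IVT_interv (fun s => r s - c) 0 (eta / 2)) as [e2 [He2a He2b]].
  { intros s Hs. apply (continuity_pt_minus r (fun _ => c)). apply Hrc. apply Rabs_def1; lra.
    apply continuity_pt_const. intros u v; reflexivity. }
  { lra. } { simpl. rewrite Hr0. lra. }
  { simpl. assert (T := Hrlow (eta / 2)). lra. }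
  simpl in He2b.
  destruct (Ranalysis5.IVT_interv (fun s => c - r s) (- (eta / 2)) 0) as [z1 [Hz1a Hz1b]].
  { intros s Hs. apply (continuity_pt_minus (fun _ => c) r).
    apply continuity_pt_const. intros u v; reflexivity. apply Hrc. apply Rabs_def1; lra. }
  { lra. } { simpl. assert (T := Hrlow (- (eta / 2))). replace ((- (eta / 2)) ^ 2) with ((eta / 2) ^ 2) in T by ring. lra. }
  { simpl. rewrite Hr0. lra. }
  simpl in Hz1b.
  set (e1 := - z1). assert (Ee1 : e1 = - z1) by reflexivity.
  assert (He2p : 0 < e2).
  { destruct (Req_dec e2 0) as [E|E]; [| lra]. rewrite E, Hr0 in He2b. lra. }
  assert (He1p : 0 < e1).
  { unfold e1. destruct (Req_dec z1 0) as [E|E]; [| lra]. rewrite E, Hr0 in Hz1b. lra. }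
  assert (Re2 : r e2 = c) by lra. assert (Rz1 : r z1 = c) by lra.
  assert (Ae2 : Rabs e2 < eta) by (rewrite Rabs_right; lra).
  assert (Az1 : Rabs z1 < eta) by (rewrite Rabs_left; lra).
  assert (Char : forall s, Rabs s < eta -> (r s < c <-> - e1 < s < e2)).
  { intros s Hs. unfold e1. split.
    - intros Hrs. split.
      + destruct (Rlt_le_dec z1 s) as [l|l]; [lra|]. exfalso.
        destruct (Req_dec s z1) as [E|E]. { subst s. lra. }
        assert (T := r_mono phi eta z1 s H0 HL Az1 Hs).
        assert (Rabs s > Rabs z1 \/ False) as [Q|Q]; [|idtac|contradiction].
        { left. rewrite (Rabs_left s), (Rabs_left z1) by lra. lra. }
        assert (T' : r z1 < r s). { unfold r. apply T. rewrite Rabs_left, (Rabs_left s), (Rabs_left z1) by lra. ring. lra. }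
        lra.
      + destruct (Rlt_le_dec s e2) as [l|l]; [lra|]. exfalso.
        destruct (Req_dec s e2) as [E|E]. { subst s. lra. }
        assert (T' : r e2 < r s). { unfold r. apply (r_mono phi eta); auto.
          rewrite (Rabs_right (s - e2)), (Rabs_right s), (Rabs_right e2) by lra. ring.
          rewrite (Rabs_right s), (Rabs_right e2) by lra. lra. }
        lra.
    - intros [Hl Hu]. destruct (Rlt_le_dec s 0) as [Hn|Hn].
      + rewrite <- Rz1. unfold r. apply (r_mono phi eta); auto.
        rewrite (Rabs_left (z1 - s)), (Rabs_left s), (Rabs_left z1) by lra. ring.
        rewrite (Rabs_left s), (Rabs_left z1) by lra. lra.
      + rewrite <- Re2. unfold r. apply (r_mono phi eta); auto.
        destruct (Req_dec s 0) as [E|E].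
        * subst s. rewrite Rminus_0_r, Rabs_R0, Rminus_0_r. reflexivity.
        * rewrite (Rabs_right (e2 - s)), (Rabs_right s), (Rabs_right e2) by lra. ring.
        * rewrite (Rabs_right s), (Rabs_right e2) by lra. lra. }
  assert (Hpe : forall t, -1 < t < 1 -> - e1 < psi e1 e2 t < e2 /\ Rabs (psi e1 e2 t) < eta).
  { intros t Ht. destruct (psi_range e1 e2 t He1p He2p Ht) as [A1 A2]. split; [lra|]. apply Rabs_def1; lra. }
  set (D1 := fun t => (- nu2) * dpsi e1 e2 t + nu1 * (dpsi e1 e2 t * dphi (psi e1 e2 t))).
  set (D2 := fun t => nu1 * dpsi e1 e2 t + nu2 * (dpsi e1 e2 t * dphi (psi e1 e2 t))).
  set (g1 := fun t => Pc1 a nu1 nu2 (psi e1 e2 t) (phi (psi e1 e2 t))).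
  set (g2 := fun t => Pc2 b nu1 nu2 (psi e1 e2 t) (phi (psi e1 e2 t))).
  assert (Hk : forall t, -1 < t < 1 -> is_derive (fun t => phi (psi e1 e2 t)) t (dpsi e1 e2 t * dphi (psi e1 e2 t))).
  { intros t Ht. apply (is_derive_comp phi (psi e1 e2)). apply Hder. apply Hpe; auto. apply psi_deriv; auto. }
  assert (Hg1 : forall t, -1 < t < 1 -> is_derive g1 t (D1 t)).
  { intros t Ht. unfold D1. replace ((- nu2) * dpsi e1 e2 t + nu1 * (dpsi e1 e2 t * dphi (psi e1 e2 t)))
      with (- dpsi e1 e2 t * nu2 + (dpsi e1 e2 t * dphi (psi e1 e2 t)) * nu1) by ring.
    apply deriv_Pc1. apply psi_deriv; auto. apply Hk; auto. }
  assert (Hg2 : forall t, -1 < t < 1 -> is_derive g2 t (D2 t)).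
  { intros t Ht. unfold D2. replace (nu1 * dpsi e1 e2 t + nu2 * (dpsi e1 e2 t * dphi (psi e1 e2 t)))
      with (dpsi e1 e2 t * nu1 + (dpsi e1 e2 t * dphi (psi e1 e2 t)) * nu2) by ring.
    apply deriv_Pc2. apply psi_deriv; auto. apply Hk; auto. }
  assert (Hloc : forall t, -1 < t < 1 -> locally t (fun y => -1 < y < 1)).
  { intros t Ht. apply (locally_of_eps t (Rmin (1 - t) (1 + t))). apply Rmin_glb_lt; lra.
    intros y Hy. assert (T1 := Rmin_l (1 - t) (1 + t)). assert (T2 := Rmin_r (1 - t) (1 + t)).
    apply Rabs_def2c in Hy. lra. }
  assert (Hcont : forall (D : R -> R) g, (forall t, -1 < t < 1 -> is_derive g t (D t)) ->
     (forall t, -1 < t < 1 -> continuity_pt D t) -> forall t, -1 < t < 1 -> continuous (Derive g) t).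
  { intros D g HD HC t Ht. apply (continuous_ext_loc _ D).
    - generalize (Hloc t Ht). apply filter_imp. intros y Hy. symmetry. apply is_derive_unique. apply HD; auto.
    - apply continuity_pt_filterlim. apply HC; auto. }
  exists d. split; [exact Hd|]. split; [exact Hd1|].
  exists g1, g2, 1. split; [|split].
  - split; [lra|]. split; [|split; [|split]].
    + intros t Ht.
      assert (Ht' : -1 < t < 1) by lra.
      split; [exists (D1 t); apply Hg1; auto|]. split; [exists (D2 t); apply Hg2; auto|].
      split; [apply (Hcont D1); auto; intros y Hy; apply contD; auto; apply Hdc; apply Hpe; auto|].
      split; [apply (Hcont D2); auto; intros y Hy; apply contD; auto; apply Hdc; apply Hpe; auto|].
      rewrite (is_derive_unique _ _ _ (Hg1 t Ht')), (is_derive_unique _ _ _ (Hg2 t Ht')).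
      assert (Hdp := dpsi_pos e1 e2 t He1p He2p Ht').
      assert (Comb : (- nu2) * D1 t + nu1 * D2 t = dpsi e1 e2 t * Nu) by (unfold D1, D2, Nu; ring).
      assert (0 < dpsi e1 e2 t * Nu) by (apply Rmult_lt_0_compat; lra).
      destruct (Req_dec (D1 t) 0) as [Z|Z]; [right; intros Z2; rewrite Z, Z2 in Comb; lra| left; exact Z].
    + intros s t Hs Ht E1 E2.
      assert (Hs' : -1 < s < 1) by lra. assert (Ht' : -1 < t < 1) by lra.
      apply (psi_inj e1 e2 s t He1p He2p Hs' Ht').
      assert (Comb : (- nu2) * (g1 s - g1 t) + nu1 * (g2 s - g2 t) = Nu * (psi e1 e2 s - psi e1 e2 t))
        by (unfold g1, g2, Pc1, Pc2, Nu; ring).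
      rewrite E1, E2 in Comb. assert (Z : Nu * (psi e1 e2 s - psi e1 e2 t) = 0) by lra.
      apply Rmult_integral in Z. destruct Z as [Z|Z]; lra.
    + unfold g1, Pc1. rewrite psi0, H0 by auto. ring.
    + unfold g2, Pc2. rewrite psi0, H0 by auto. ring.
  - intros t Ht. assert (Ht' : -1 < t < 1) by lra. destruct (Hpe t Ht') as [[P1 P2] P3].
    apply dist2_lt_iff; auto. unfold g1, g2. rewrite Pc_sq. fold Nu.
    assert (Q : r (psi e1 e2 t) < c) by (apply Char; auto).
    unfold r in Q. replace (d ^ 2) with (Nu * c) by (unfold c; field; lra).
    apply Rmult_lt_compat_l; lra.
  - intros x y Hxy. split.
    + intros Gxy.
      set (s := (- nu2 * (x - a) + nu1 * (y - b)) / Nu). set (h := (nu1 * (x - a) + nu2 * (y - b)) / Nu).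
      assert (Ex : Pc1 a nu1 nu2 s h = x) by (unfold Pc1, s, h, Nu; field; exact (Rgt_not_eq _ _ HNu)).
      assert (Ey : Pc2 b nu1 nu2 s h = y) by (unfold Pc2, s, h, Nu; field; exact (Rgt_not_eq _ _ HNu)).
      assert (Bx := dist2_ge1 x y a b). assert (By := dist2_ge2 x y a b).
      assert (Bnd : forall p q, Rabs ((p * (x - a) + q * (y - b)) / Nu) <= (Rabs p + Rabs q) * dist2 x y a b / Nu).
      { intros p q. unfold Rdiv. rewrite Rabs_mult, Rabs_inv, (Rabs_right Nu) by lra.
        apply Rmult_le_compat_r. left; apply Rinv_0_lt_compat; lra.
        eapply Rle_trans; [apply abs_lin2|].
        assert (0 <= Rabs p) by apply Rabs_pos. assert (0 <= Rabs q) by apply Rabs_pos.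
        assert (Rabs p * Rabs (x - a) <= Rabs p * dist2 x y a b) by (apply Rmult_le_compat_l; auto).
        assert (Rabs q * Rabs (y - b) <= Rabs q * dist2 x y a b) by (apply Rmult_le_compat_l; auto). lra. }
      assert (Mbound : M * dist2 x y a b / Nu < eta / 2).
      { assert (0 <= dist2 x y a b) by apply dist2_pos.
        apply Rlt_le_trans with (M * d / Nu). unfold Rdiv. apply Rmult_lt_compat_r.
        apply Rinv_0_lt_compat; lra. apply Rmult_lt_compat_l; lra.
        apply Rle_trans with (M * (Nu * eta / (2 * M)) / Nu). unfold Rdiv at 1 3. apply Rmult_le_compat_r.
        left; apply Rinv_0_lt_compat; lra. apply Rmult_le_compat_l; lra.
        right; field; lra. }
      assert (Hs : Rabs s < eta).
      { assert (T := Bnd (- nu2) nu1). rewrite Rabs_Ropp in T. fold s in T. unfold M in Mbound. lra. }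
      assert (Hh : Rabs h < eta).
      { assert (T := Bnd nu1 nu2). fold h in T. unfold M in Mbound. lra. }
      rewrite <- Ex, <- Ey in Gxy.
      assert (Eh := Huniq s h Hs Hh Gxy).
      assert (Hrs : r s < c).
      { apply dist2_lt_iff in Hxy; auto. rewrite <- Ex, <- Ey, Pc_sq in Hxy. fold Nu in Hxy.
        unfold r. rewrite <- Eh. apply Rmult_lt_reg_l with Nu; auto. replace (Nu * c) with (d ^ 2) by (unfold c; field; lra).
        exact Hxy. }
      apply Char in Hrs; auto.
      destruct (psi_surj e1 e2 s He1p He2p Hrs) as [t [Ht Hpt]].
      exists t. split; [lra|]. unfold g1, g2. rewrite Hpt, <- Eh. split; auto.
    + intros [t [Ht [E1 E2]]]. assert (Ht' : -1 < t < 1) by lra.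
      destruct (Hpe t Ht') as [_ P3]. rewrite <- E1, <- E2. unfold g1, g2. apply Hphi. exact P3.
Qed.

Lemma choose_n m11 m12 m21 m22 : m21 - m12 = 2 -> m11 * m22 - m12 * m21 = 0 ->
  exists n1 n2, 0 < n1 ^ 2 + n2 ^ 2 /\ - n2 * m11 + n1 * m21 = 0 /\ - n2 * m12 + n1 * m22 = 0 /\
    0 < (n1 * m11 + n2 * m21) ^ 2 + (n1 * m12 + n2 * m22) ^ 2.
Proof.
  intros Hs Hd.
  assert (S1 : 0 <= m11 ^ 2) by apply pow2_ge_0. assert (S2 : 0 <= m21 ^ 2) by apply pow2_ge_0.
  destruct (Rlt_le_dec 0 (m11 ^ 2 + m21 ^ 2)) as [Hp|Hp].
  - exists m11, m21. split; [exact Hp|]. split; [ring|]. split; [lra|].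
    assert (0 < (m11 * m11 + m21 * m21) ^ 2) by (apply pow_lt; simpl in Hp; lra).
    assert (0 <= (m11 * m12 + m21 * m22) ^ 2) by apply pow2_ge_0. lra.
  - assert (Z1 : m11 ^ 2 = 0) by lra. assert (Z2 : m21 ^ 2 = 0) by lra.
    assert (Y1 : m11 = 0) by (destruct (Req_dec m11 0) as [E|E]; [exact E| exfalso; exact (pow_nonzero m11 2 E Z1)]).
    assert (Y2 : m21 = 0) by (destruct (Req_dec m21 0) as [E|E]; [exact E| exfalso; exact (pow_nonzero m21 2 E Z2)]).
    subst.
    exists m12, m22. assert (m12 = -2) by lra. subst.
    assert (0 <= m22 ^ 2) by apply pow2_ge_0.
    split; [simpl; lra|]. split; [ring|]. split; [ring|].
    assert (0 < ((-2) * (-2) + m22 * m22) ^ 2) by (apply pow_lt; simpl in *; lra).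
    replace (((-2) * 0 + m22 * 0) ^ 2 + ((-2) * (-2) + m22 * m22) ^ 2) with (((-2) * (-2) + m22 * m22) ^ 2) by ring. lra.
Qed.

Lemma choose_k m11 m12 m21 m22 n1 n2 : m21 - m12 = 2 -> m11 * m22 - m12 * m21 = 0 ->
  0 < n1 ^ 2 + n2 ^ 2 ->
  exists k0, Rabs k0 <= 1 /\ Qgen m11 m22 (m12 + m21) (k0 * n1 - n2) (k0 * n2 + n1) <> 0.
Proof.
  intros Hs Hd HN.
  set (c1 := m11). set (c2 := m22). set (c3 := m12 + m21).
  destruct (Req_dec (Qgen c1 c2 c3 (0 * n1 - n2) (0 * n2 + n1)) 0) as [Q0|Q0];
    [| exists 0; rewrite Rabs_R0; split; [lra|exact Q0]].
  destruct (Req_dec (Qgen c1 c2 c3 (1 * n1 - n2) (1 * n2 + n1)) 0) as [Qp|Qp];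
    [| exists 1; rewrite Rabs_R1; split; [lra|exact Qp]].
  destruct (Req_dec (Qgen c1 c2 c3 (-1 * n1 - n2) (-1 * n2 + n1)) 0) as [Qm|Qm];
    [| exists (-1); split; [unfold Rabs; destruct Rcase_abs; lra|exact Qm]].
  exfalso. unfold Qgen in Q0, Qp, Qm.
  set (al := c1 * n2 ^ 2 + c2 * n1 ^ 2 - n1 * n2 * c3).
  set (be := 2 * c1 * n1 * n2 - 2 * c2 * n1 * n2 - c3 * (n1 ^ 2 - n2 ^ 2)).
  set (ga := c1 * n1 ^ 2 + c2 * n2 ^ 2 + n1 * n2 * c3).
  assert (Ea : al = 0) by (unfold al; lra).
  assert (Eg : ga = 0) by (unfold ga; lra).
  assert (Eb : be = 0) by (unfold be; lra).
  assert (E3 : c3 * (n1 ^ 2 + n2 ^ 2) ^ 2 = 2 * (n1 * n2) * (ga - al) - (n1 ^ 2 - n2 ^ 2) * be) by (unfold al, be, ga; ring).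
  assert (Eu : (c1 - c2) * (n1 ^ 2 + n2 ^ 2) ^ 2 = (n1 ^ 2 - n2 ^ 2) * (ga - al) + 2 * (n1 * n2) * be) by (unfold al, be, ga; ring).
  assert (Es : (c1 + c2) * (n1 ^ 2 + n2 ^ 2) = al + ga) by (unfold al, ga; ring).
  rewrite Ea, Eb, Eg in E3, Eu. rewrite Ea, Eg in Es.
  assert (HN2 : 0 < (n1 ^ 2 + n2 ^ 2) ^ 2) by (apply pow_lt; lra).
  assert (Z3 : c3 = 0) by (apply Rmult_eq_reg_r with ((n1 ^ 2 + n2 ^ 2) ^ 2); lra).
  assert (Zu : c1 - c2 = 0) by (apply Rmult_eq_reg_r with ((n1 ^ 2 + n2 ^ 2) ^ 2); lra).
  assert (Zs : c1 + c2 = 0) by (apply Rmult_eq_reg_r with (n1 ^ 2 + n2 ^ 2); lra).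
  unfold c1, c2, c3 in *.
  assert (m11 = 0) by lra. assert (m22 = 0) by lra. assert (m21 = 1) by lra. assert (m12 = -1) by lra.
  subst. lra.
Qed.

Lemma bound_conv Q D r C : 0 < D -> 0 <= r -> 0 < C ->
  (0 < r -> Rabs (Q / D ^ 3) <= C / r) -> Rabs Q * r <= C * D ^ 3.
Proof.
  intros HD Hr HC H. assert (HD3 : 0 < D ^ 3) by (apply pow_lt; lra).
  destruct (Req_dec r 0) as [Z|Z].
  - subst. rewrite Rmult_0_r. apply Rmult_le_pos; lra.
  - assert (Hr' : 0 < r) by lra. specialize (H Hr').
    unfold Rdiv in H. rewrite Rabs_mult, Rabs_inv, (Rabs_right (D ^ 3)) in H by lra.
    apply Rmult_le_compat_r with (r := D ^ 3 * r) in H; [|apply Rmult_le_pos; lra].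
    replace (Rabs Q * / D ^ 3 * (D ^ 3 * r)) with (Rabs Q * r) in H by (field; lra).
    replace (C * / r * (D ^ 3 * r)) with (C * D ^ 3) in H by (field; lra). exact H.
Qed.

Lemma pos_sq a b : ~ (a = 0 /\ b = 0) -> 0 < a ^ 2 + b ^ 2.
Proof.
  intros H. destruct (Req_dec a 0) as [Ea|Ea].
  - destruct (Req_dec b 0) as [Eb|Eb]; [exfalso; auto|].
    assert (0 < b ^ 2) by (apply pow_lt_compat_l_R || (simpl; nra)). assert (0 <= a ^ 2) by apply pow2_ge_0. lra.
  - assert (0 < a ^ 2) by (simpl; nra). assert (0 <= b ^ 2) by apply pow2_ge_0. lra.
Qed.

Theorem theoremB (Om : R -> R -> Prop) (u : R -> R -> R) (x0 y0 : R) :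
  domain2 Om ->
  C2_on Om u ->
  singular Om u x0 y0 ->
  (exists C d, 0 < C /\ 0 < d /\
     (forall x y, dist2 x y x0 y0 < d -> Om x y) /\
     (forall x y, dist2 x y x0 y0 < d -> ~ singular Om u x y ->
        Rabs (Hcurv u x y) <= C / dist2 x y x0 y0)) ->
  isolated_in (singular Om u) x0 y0 \/
  (exists d, 0 < d /\ (forall x y, dist2 x y x0 y0 < d -> Om x y) /\
     exists (g1 g2 : R -> R) (e : R),
       C1_curve_through g1 g2 e x0 y0 /\
       (forall t, -e < t < e -> dist2 (g1 t) (g2 t) x0 y0 < d) /\
       forall x y, dist2 x y x0 y0 < d ->
         (singular Om u x y <-> exists t, -e < t < e /\ g1 t = x /\ g2 t = y)).
Proof.
  intros [HO _] HC2 [HOm0 [Hs1 Hs2]] [C [dH [HC [HdH [HOmB Hbd]]]]].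
  assert (F1z : F1 u x0 y0 = 0) by exact Hs1.
  assert (F2z : F2 u x0 y0 = 0) by exact Hs2.
  assert (SD1 := SD_F1 Om u x0 y0 HO HC2 HOm0).
  assert (SD2 := SD_F2 Om u x0 y0 HO HC2 HOm0).
  assert (Sch := schwarz_at Om u x0 y0 HO HC2 HOm0).
  assert (Hsym : (dx (dy u) x0 y0 + 1) - (dy (dx u) x0 y0 - 1) = 2) by (rewrite Sch; ring).
  destruct (Req_dec (dx (dx u) x0 y0 * dy (dy u) x0 y0 - (dy (dx u) x0 y0 - 1) * (dx (dy u) x0 y0 + 1)) 0) as [Hdet | Hdet].
  2: { left. destruct (nondeg _ _ _ _ _ _ _ _ SD1 SD2 F1z F2z Hdet) as [d1 [Hd1 Hn]].
       exists (Rmin d1 dH). split; [apply Rmin_glb_lt; lra|]. intros x y Hxy [Oxy [E1 E2]].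
       assert (T1 := dist2_ge1 x y x0 y0). assert (T2 := dist2_ge2 x y x0 y0). assert (T3 := Rmin_l d1 dH).
       apply Hn; try lra; assumption. }
  right.
  destruct (choose_n _ _ _ _ Hsym Hdet) as [n1 [n2 [HN [Hw1 [Hw2 HNu]]]]].
  destruct (choose_k _ _ _ _ n1 n2 Hsym Hdet HN) as [k0 [Hk0 HQ0]].
  pose proof HC2 as [HCu [HCx HCy]].
  destruct (HCx x0 y0 HOm0) as [_ [_ [_ [Cxx Cxy]]]].
  destruct (HCy x0 y0 HOm0) as [_ [_ [_ [Cyx Cyy]]]].
  destruct (deg_main (F1 u) (F2 u) (dx (dx u)) (dy (dy u)) (fun x y => dy (dx u) x y + dx (dy u) x y)
     x0 y0 _ _ _ _ n1 n2 k0 C dH SD1 SD2 F1z F2z HN Hw1 Hw2 HNu Hk0) as [ddeg [Hddeg Hdeg]].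
  { replace (dy (dx u) x0 y0 + dx (dy u) x0 y0) with ((dy (dx u) x0 y0 - 1) + (dx (dy u) x0 y0 + 1)) by ring.
    exact HQ0. }
  { intros eps Heps.
    destruct (cont2_eps _ _ _ Cxx eps Heps) as [e1 [He1 H1]].
    destruct (cont2_eps _ _ _ Cyy eps Heps) as [e2 [He2 H2]].
    destruct (cont2_eps _ _ _ Cxy (eps / 2) ltac:(lra)) as [e3 [He3 H3]].
    destruct (cont2_eps _ _ _ Cyx (eps / 2) ltac:(lra)) as [e4 [He4 H4]].
    exists (Rmin (Rmin e1 e2) (Rmin e3 e4)). split; [repeat apply Rmin_glb_lt; lra|].
    intros x y Hx Hy.
    assert (M1 := Rmin_l (Rmin e1 e2) (Rmin e3 e4)). assert (M2 := Rmin_r (Rmin e1 e2) (Rmin e3 e4)).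
    assert (M3 := Rmin_l e1 e2). assert (M4 := Rmin_r e1 e2). assert (M5 := Rmin_l e3 e4). assert (M6 := Rmin_r e3 e4).
    split; [apply H1; lra|]. split; [apply H2; lra|].
    assert (A3 := H3 x y ltac:(lra) ltac:(lra)). assert (A4 := H4 x y ltac:(lra) ltac:(lra)).
    replace (dy (dx u) x y + dx (dy u) x y - (dy (dx u) x0 y0 + dx (dy u) x0 y0))
      with ((dy (dx u) x y - dy (dx u) x0 y0) + (dx (dy u) x y - dx (dy u) x0 y0)) by ring.
    eapply Rle_lt_trans; [apply Rabs_triang|]. lra. }
  { exact HC. } { exact HdH. }
  { intros x y Hxy Hnz.
    assert (Oxy := HOmB x y Hxy).
    assert (Hns : ~ singular Om u x y) by (intros [_ [E1 E2]]; apply Hnz; split; assumption).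
    assert (Hpos := pos_sq _ _ Hnz).
    assert (HD : 0 < Dnorm u x y) by (unfold Dnorm; apply sqrt_lt_R0; exact Hpos).
    apply (bound_conv _ (Dnorm u x y)); auto. apply dist2_pos.
    intros _. assert (E := Hcurv_formula Om u x y HC2 Oxy Hpos).
    assert (E' : Qgen (dx (dx u) x y) (dy (dy u) x y) (dy (dx u) x y + dx (dy u) x y) (F1 u x y) (F2 u x y) / Dnorm u x y ^ 3 = Hcurv u x y) by (rewrite E; reflexivity).
    cbv beta. rewrite E'. apply Hbd; auto. }
  set (G := fun x y => n1 * F1 u x y + n2 * F2 u x y).
  set (gx := fun x y => n1 * dx (dx u) x y + n2 * (dx (dy u) x y + 1) + 0).
  set (gy := fun x y => n1 * (dy (dx u) x y - 1) + n2 * dy (dy u) x y + 0).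
  assert (HSDall : forall x y, Om x y -> SD G x y (gx x y) (gy x y)).
  { intros x y Oxy. apply (SD_ext (fun x y => n1 * F1 u x y + n2 * F2 u x y + 0 * x + 0 * y)).
    intros; unfold G; ring.
    exact (SD_comb _ _ x y _ _ _ _ n1 n2 0 0 (SD_F1 Om u x y HO HC2 Oxy) (SD_F2 Om u x y HO HC2 Oxy)). }
  assert (Hcg : forall x y, Om x y -> cont2 gx x y /\ cont2 gy x y).
  { intros x y Oxy. destruct (HCx x y Oxy) as [_ [_ [_ [Axx Axy]]]]. destruct (HCy x y Oxy) as [_ [_ [_ [Ayx Ayy]]]].
    apply continuity_2d_pt_filterlim in Axx. apply continuity_2d_pt_filterlim in Axy.
    apply continuity_2d_pt_filterlim in Ayx. apply continuity_2d_pt_filterlim in Ayy.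
    split; apply continuity_2d_pt_filterlim; unfold gx, gy.
    - apply (continuity_2d_pt_plus (fun x y => n1 * dx (dx u) x y + n2 * (dx (dy u) x y + 1)) (fun _ _ => 0)); [| apply continuity_2d_pt_const].
      apply (continuity_2d_pt_plus (fun x y => n1 * dx (dx u) x y) (fun x y => n2 * (dx (dy u) x y + 1))).
      + apply (continuity_2d_pt_mult (fun _ _ => n1) (dx (dx u))); auto. apply continuity_2d_pt_const.
      + apply (continuity_2d_pt_mult (fun _ _ => n2) (fun x y => dx (dy u) x y + 1)). apply continuity_2d_pt_const.
        apply (continuity_2d_pt_plus (dx (dy u)) (fun _ _ => 1)); auto. apply continuity_2d_pt_const.
    - apply (continuity_2d_pt_plus (fun x y => n1 * (dy (dx u) x y - 1) + n2 * dy (dy u) x y) (fun _ _ => 0)); [| apply continuity_2d_pt_const].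
      apply (continuity_2d_pt_plus (fun x y => n1 * (dy (dx u) x y - 1)) (fun x y => n2 * dy (dy u) x y)).
      + apply (continuity_2d_pt_mult (fun _ _ => n1) (fun x y => dy (dx u) x y - 1)). apply continuity_2d_pt_const.
        apply (continuity_2d_pt_minus (dy (dx u)) (fun _ _ => 1)); auto. apply continuity_2d_pt_const.
      + apply (continuity_2d_pt_mult (fun _ _ => n2) (dy (dy u))); auto. apply continuity_2d_pt_const. }
  set (nu1 := gx x0 y0). set (nu2 := gy x0 y0).
  assert (HNu' : 0 < nu1 ^ 2 + nu2 ^ 2) by (unfold nu1, nu2, gx, gy; rewrite !Rplus_0_r; exact HNu).
  assert (HM := M_pos nu1 nu2 HNu').
  set (cl := (nu1 ^ 2 + nu2 ^ 2) / (2 * (Rabs nu1 + Rabs nu2))).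
  assert (Hcl : 0 < cl) by (unfold cl; apply Rdiv_lt_0_compat; lra).
  destruct (Hcg x0 y0 HOm0) as [Cgx Cgy].
  destruct (cont2_eps _ _ _ Cgx cl Hcl) as [dx1 [Hdx1 Hgx1]].
  destruct (cont2_eps _ _ _ Cgy cl Hcl) as [dy1 [Hdy1 Hgy1]].
  destruct (open_box Om x0 y0 HO HOm0) as [rO [HrO HboxO]].
  set (rho := Rmin (Rmin rO (Rmin dx1 dy1)) ddeg).
  assert (R1 := Rmin_l (Rmin rO (Rmin dx1 dy1)) ddeg). assert (R2 := Rmin_r (Rmin rO (Rmin dx1 dy1)) ddeg).
  assert (R3 := Rmin_l rO (Rmin dx1 dy1)). assert (R4 := Rmin_r rO (Rmin dx1 dy1)).
  assert (R5 := Rmin_l dx1 dy1). assert (R6 := Rmin_r dx1 dy1).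
  fold rho in R1, R2.
  assert (Hrho : 0 < rho) by (unfold rho; repeat apply Rmin_glb_lt; lra).
  assert (BoxOm : forall x y, Rabs (x - x0) < rho -> Rabs (y - y0) < rho -> Om x y).
  { intros x y Hx Hy. apply HboxO; lra. }
  assert (G0 : G x0 y0 = 0) by (unfold G; rewrite F1z, F2z; ring).
  destruct (ift_core G x0 y0 nu1 nu2 rho (HSDall x0 y0 HOm0) G0 HNu' Hrho)
    as [eta [phi [Heta [Hphi0 [HB [Hphi [Huniq HL]]]]]]].
  assert (Hclose : forall x y, Rabs (x - x0) < rho -> Rabs (y - y0) < rho ->
     Rabs (gx x y - nu1) <= (nu1 ^ 2 + nu2 ^ 2) / (2 * (Rabs nu1 + Rabs nu2)) /\ Rabs (gy x y - nu2) <= (nu1 ^ 2 + nu2 ^ 2) / (2 * (Rabs nu1 + Rabs nu2))).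
  { intros x y Hx Hy. assert (Ecl : (nu1 ^ 2 + nu2 ^ 2) / (2 * (Rabs nu1 + Rabs nu2)) = cl) by reflexivity.
    rewrite Ecl. split; left; [apply Hgx1| apply Hgy1]; lra. }
  assert (Hder := ift_deriv G gx gy x0 y0 nu1 nu2 rho eta phi HNu' Heta HB Hphi HL
     (fun x y Hx Hy => HSDall x y (BoxOm x y Hx Hy)) Hclose).
  assert (Hdc := dphi_cont gx gy x0 y0 nu1 nu2 rho eta phi HNu' HB (fun s Hs => proj1 (Hphi s Hs)) HL
     (fun x y Hx Hy => Hcg x y (BoxOm x y Hx Hy)) Hclose).
  destruct (curve_build G phi (dphi_of gx gy x0 y0 nu1 nu2 phi) x0 y0 nu1 nu2 eta rho HNu' Heta Hrho Hphi0
     Hphi Huniq HL Hder Hdc) as [d [Hd [Hdrho [g1 [g2 [e [Hcurve [Hrange Hiff]]]]]]]].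
  assert (Ball : forall x y, dist2 x y x0 y0 < d -> Rabs (x - x0) < rho /\ Rabs (y - y0) < rho).
  { intros x y Hxy. assert (T1 := dist2_ge1 x y x0 y0). assert (T2 := dist2_ge2 x y x0 y0). split; lra. }
  exists d. split; [exact Hd|]. split.
  { intros x y Hxy. destruct (Ball x y Hxy). apply BoxOm; auto. }
  exists g1, g2, e. split; [exact Hcurve|]. split; [exact Hrange|].
  intros x y Hxy. rewrite <- (Hiff x y Hxy). destruct (Ball x y Hxy) as [Bx By]. split.
  - intros [_ [E1 E2]]. unfold G, F1, F2. rewrite E1, E2. ring.
  - intros HG. assert (W := Hdeg x y ltac:(lra) ltac:(lra) HG).
    assert (HN0 : n1 ^ 2 + n2 ^ 2 <> 0) by lra.
    assert (E1 : F1 u x y = 0).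
    { apply (Rmult_eq_reg_l (n1 ^ 2 + n2 ^ 2)); auto.
      replace ((n1 ^ 2 + n2 ^ 2) * F1 u x y) with (n1 * (n1 * F1 u x y + n2 * F2 u x y) - n2 * (- n2 * F1 u x y + n1 * F2 u x y)) by ring.
      unfold G in HG. rewrite HG, W. ring. }
    assert (E2 : F2 u x y = 0).
    { apply (Rmult_eq_reg_l (n1 ^ 2 + n2 ^ 2)); auto.
      replace ((n1 ^ 2 + n2 ^ 2) * F2 u x y) with (n2 * (n1 * F1 u x y + n2 * F2 u x y) + n1 * (- n2 * F1 u x y + n1 * F2 u x y)) by ring.
      unfold G in HG. rewrite HG, W. ring. }
    split; [apply BoxOm; auto|]. split; [exact E1| exact E2].
Qed.
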